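(* Let $\Phi:\mathbb{R}\times(-\epsilon,\epsilon)\to\mathbb{R}^2$ be an orientation-preserving $C^2$ diffeomorphism onto a domain $\Omega\subset\mathbb{R}^2$, and write $\Phi(\sigma;t)=(x(\sigma;t),\,y(\sigma;t))$. For each $t\in(-\epsilon,\epsilon)$ let $\gamma_t$ be the curve $\sigma\mapsto\Phi(\sigma;t)$. Define \[ \varphi=\frac{\det d\Phi}{\|\gamma_t'\|}\quad\text{and}\quad \mathbf{N}=\frac{(-\partial y/\partial\sigma)\,\mathbf{e}_1+(\partial x/\partial\sigma)\,\mathbf{e}_2}{\|\gamma_t'\|}, \] let $s$ be the arc-length parameter (modulo an additive constant) along each integral curve of $\mathbf{N}$, and for $p\in\Omega$ let $\kappa(p)$ be the signed curvature at $p$ of the curve $\gamma_t$ on which $p$ lies, signed in accordance with the normal field $\mathbf{N}$. Then there exists a critical-point-free harmonic function $U$ on $\Omega$ whose family of level curves is $\{\gamma_t\mid t\in(-\epsilon,\epsilon)\}$ if and only if $\frac{\partial\varphi}{\partial s}+\kappa\varphi$ is constant on each curve $\gamma_t$, i.e. \[ \frac{\partial}{\partial\sigma}\left(\frac{\partial\varphi}{\partial s}+\kappa\varphi\right)\equiv 0 . \]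
   Context: Here $\det d\Phi$ is the Jacobian determinant of $\Phi$ at $(\sigma;t)$ and $\|\gamma_t'\|=\|\partial\Phi/\partial\sigma\|$, so $\varphi$ and $\mathbf{N}$ are functions on $\mathbb{R}\times(-\epsilon,\epsilon)$, transported to $\Omega$ via $\Phi$ when needed. Signed curvature: with unit tangent $\mathbf{T}$ of $\gamma_t$ chosen so that $(\mathbf{T},\mathbf{N})$ is a positively oriented frame, $\kappa$ is defined by $d\mathbf{T}/d\ell=\kappa\mathbf{N}$, where $\ell$ is arc length along $\gamma_t$. The quantity $\frac{\partial\varphi}{\partial s}+\kappa\varphi$ is regarded as a function on $\mathbb{R}\times(-\epsilon,\epsilon)$: for $q$ there, $(\kappa\varphi)(q)=\kappa(\Phi(q))\varphi(q)$, and if $\alpha:(-\delta,\delta)\to\Omega$ is the unit-speed integral curve of $\mathbf{N}$ with $\alpha(0)=\Phi(q)$, then $\frac{\partial\varphi}{\partial s}(q)=\frac{d}{ds}\big|_{s=0}\varphi(\Phi^{-1}(\alpha(s)))$. ''Level-curve family $\{\gamma_t\}$'' means the level sets of $U$ in $\Omega$ are exactly the curves $\gamma_t$. *)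

(* Defs.v *)
From Stdlib Require Import Reals.
From Coquelicot Require Import Coquelicot.
Open Scope R_scope.

Definition d1 (f : R -> R -> R) : R -> R -> R :=
  fun a b => Derive (fun u => f u b) a.
Definition d2 (f : R -> R -> R) : R -> R -> R :=
  fun a b => Derive (fun v => f a v) b.

Definition C0_on (D : R -> R -> Prop) (f : R -> R -> R) : Prop :=
  forall a b, D a b -> continuous (fun p : R * R => f (fst p) (snd p)) (a, b).

Definition C1_on (D : R -> R -> Prop) (f : R -> R -> R) : Prop :=
  C0_on D f /\
  (forall a b, D a b -> ex_derive (fun u => f u b) a /\ ex_derive (fun v => f a v) b) /\
  C0_on D (d1 f) /\ C0_on D (d2 f).

Definition C2_on (D : R -> R -> Prop) (f : R -> R -> R) : Prop :=
  C1_on D f /\ C1_on D (d1 f) /\ C1_on D (d2 f).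

Definition strip (eps : R) : R -> R -> Prop := fun _ t => -eps < t < eps.

Definition image_Phi (eps : R) (X Y : R -> R -> R) : R -> R -> Prop :=
  fun x y => exists sg t, -eps < t < eps /\ X sg t = x /\ Y sg t = y.

(* (X,Y) is an orientation-preserving C^2 diffeomorphism of the strip onto
   Omega, with C^2 inverse (S,T) : Omega -> strip. *)
Definition orient_C2_diffeo (eps : R) (X Y S T : R -> R -> R) : Prop :=
  C2_on (strip eps) X /\ C2_on (strip eps) Y /\
  C2_on (image_Phi eps X Y) S /\ C2_on (image_Phi eps X Y) T /\
  (forall sg t, strip eps sg t ->
     S (X sg t) (Y sg t) = sg /\ T (X sg t) (Y sg t) = t) /\
  (forall x y, image_Phi eps X Y x y ->
     strip eps (S x y) (T x y) /\
     X (S x y) (T x y) = x /\ Y (S x y) (T x y) = y) /\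
  (forall sg t, strip eps sg t ->
     d1 X sg t * d2 Y sg t - d2 X sg t * d1 Y sg t > 0).

Definition jac (X Y : R -> R -> R) (sg t : R) : R :=
  d1 X sg t * d2 Y sg t - d2 X sg t * d1 Y sg t.

Definition speed (X Y : R -> R -> R) (sg t : R) : R :=
  sqrt (d1 X sg t ^ 2 + d1 Y sg t ^ 2).

Definition varphi (X Y : R -> R -> R) (sg t : R) : R :=
  jac X Y sg t / speed X Y sg t.

Definition N1 (X Y : R -> R -> R) (sg t : R) : R := - d1 Y sg t / speed X Y sg t.
Definition N2 (X Y : R -> R -> R) (sg t : R) : R := d1 X sg t / speed X Y sg t.

Definition T1 (X Y : R -> R -> R) (sg t : R) : R := d1 X sg t / speed X Y sg t.
Definition T2 (X Y : R -> R -> R) (sg t : R) : R := d1 Y sg t / speed X Y sg t.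

(* signed curvature: dT/dl = kappa N with dl = ||gamma_t'|| dsigma, so
   kappa = (dT/dsigma . N) / ||gamma_t'|| *)
Definition kappa (X Y : R -> R -> R) (sg t : R) : R :=
  (Derive (fun u => T1 X Y u t) sg * N1 X Y sg t
   + Derive (fun u => T2 X Y u t) sg * N2 X Y sg t) / speed X Y sg t.

(* d varphi / ds at q = (sigma; t): derivative of varphi o Phi^{-1} along N at
   Phi(q) (= derivative along the unit-speed integral curve of N through Phi(q)) *)
Definition dvarphi_ds (X Y S T : R -> R -> R) (sg t : R) : R :=
  Derive (fun h =>
    let x := X sg t + h * N1 X Y sg t in
    let y := Y sg t + h * N2 X Y sg t in
    varphi X Y (S x y) (T x y)) 0.

Definition harmonic_on (D : R -> R -> Prop) (U : R -> R -> R) : Prop :=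
  C2_on D U /\ (forall x y, D x y -> d1 (d1 U) x y + d2 (d2 U) x y = 0).

Definition no_critical_point_on (D : R -> R -> Prop) (U : R -> R -> R) : Prop :=
  forall x y, D x y -> ~ (d1 U x y = 0 /\ d2 U x y = 0).

(* the family of level sets of U in Omega is exactly {gamma_t(R) | t in (-eps,eps)} *)
Definition level_curves_are (eps : R) (X Y U : R -> R -> R) : Prop :=
  forall A : R -> R -> Prop,
    (exists c, (exists x y, image_Phi eps X Y x y /\ U x y = c) /\
       forall x y, A x y <-> (image_Phi eps X Y x y /\ U x y = c))
    <->
    (exists t, -eps < t < eps /\
       forall x y, A x y <-> exists sg, X sg t = x /\ Y sg t = y).

(* Main.v *)
From Pilot Require Import Defs.
From Stdlib Require Import Reals Lra Ranalysis5 ClassicalEpsilon.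
From Coquelicot Require Import Coquelicot.
Import Pilot.Defs.
Open Scope R_scope.

Lemma isd_plus (f g : R -> R) (x : R) a b : is_derive f x a -> is_derive g x b ->
  is_derive (fun y => f y + g y) x (a + b).
Proof. intros. apply (is_derive_plus f g x a b); auto. Qed.
Lemma isd_minus (f g : R -> R) (x : R) a b : is_derive f x a -> is_derive g x b ->
  is_derive (fun y => f y - g y) x (a - b).
Proof. intros. apply (is_derive_minus f g x a b); auto. Qed.
Lemma isd_mult (f g : R -> R) (x : R) a b : is_derive f x a -> is_derive g x b ->
  is_derive (fun y => f y * g y) x (a * g x + f x * b).
Proof. intros. apply (is_derive_mult f g x a b); auto. intros; apply Rmult_comm. Qed.
Lemma isd_opp (f : R -> R) (x : R) a : is_derive f x a -> is_derive (fun y => - f y) x (- a).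
Proof. intros. apply (is_derive_opp f x a); auto. Qed.
Lemma isd_inv (f : R -> R) (x : R) a : is_derive f x a -> f x <> 0 ->
  is_derive (fun y => / f y) x (- a / (f x * f x)).
Proof. intros. replace (f x * f x) with (f x ^ 2) by ring. apply is_derive_inv; auto. Qed.
Lemma isd_const (c x : R) : is_derive (fun _ => c) x 0.
Proof. apply (is_derive_const c x). Qed.
Lemma isd_id (x : R) : is_derive (fun y => y) x 1.
Proof. apply (is_derive_id x). Qed.
Lemma isd_comp (f g : R -> R) (x : R) a b : is_derive f (g x) a -> is_derive g x b ->
  is_derive (fun y => f (g y)) x (a * b).
Proof. intros. rewrite Rmult_comm. apply (is_derive_comp f g x a b); auto. Qed.
Lemma isd_sqrt (f : R -> R) (x : R) a : is_derive f x a -> 0 < f x ->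
  is_derive (fun y => sqrt (f y)) x (a / (2 * sqrt (f x))).
Proof.
  intros H P. unfold Rdiv. rewrite Rmult_comm.
  apply isd_comp; auto. apply is_derive_Reals. apply derivable_pt_lim_sqrt; auto.
Qed.
Lemma isd_ext (f g : R -> R) (x : R) a : (forall y, f y = g y) -> is_derive f x a -> is_derive g x a.
Proof. intros. apply (is_derive_ext f g); auto. Qed.
Lemma isd_unique (f : R -> R) (x : R) a b : is_derive f x a -> is_derive f x b -> a = b.
Proof. intros H1 H2. rewrite <- (is_derive_unique f x a H1). apply is_derive_unique; auto. Qed.
Lemma isd_cont (f : R -> R) (x : R) a : is_derive f x a -> continuity_pt f x.
Proof. intros H. apply continuity_pt_filterlim. apply (ex_derive_continuous f x). exists a; auto. Qed.

Lemma c2d_of_C0 D f a b : C0_on D f -> D a b -> continuity_2d_pt f a b.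
Proof. intros H Hd. apply continuity_2d_pt_filterlim. apply H; auto. Qed.
Lemma C0_of_c2d (D : R -> R -> Prop) f : (forall a b, D a b -> continuity_2d_pt f a b) -> C0_on D f.
Proof. intros H a b Hd. apply (proj1 (continuity_2d_pt_filterlim f a b)). auto. Qed.

Lemma c2d_line_y f x y : continuity_2d_pt f x y -> continuity_pt (fun v => f x v) y.
Proof.
  intros H. apply continuity_pt_filterlim. intros P [e He].
  destruct (H e) as [d Hd]. exists d. intros v Hv. apply He. apply Hd.
  unfold Rminus; rewrite Rplus_opp_r, Rabs_R0; apply cond_pos. apply Hv.
Qed.

Lemma c2d_comp F g1 g2 t : continuity_2d_pt F (g1 t) (g2 t) -> continuity_pt g1 t ->
  continuity_pt g2 t -> continuity_pt (fun s => F (g1 s) (g2 s)) t.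
Proof.
  intros H H1 H2 e He.
  destruct (H (mkposreal e He)) as [d Hd].
  destruct (H1 d (cond_pos d)) as [d1 [Hd1 P1]].
  destruct (H2 d (cond_pos d)) as [d2 [Hd2 P2]].
  exists (Rmin d1 d2). split. apply Rmin_pos; auto.
  intros s [_ Hs]. simpl in *. unfold R_dist in *.
  apply (Hd (g1 s) (g2 s)).
  - destruct (Req_dec s t). subst. unfold Rminus; rewrite Rplus_opp_r, Rabs_R0; apply cond_pos.
    apply P1. split. split; auto. unfold D_x, no_cond. auto. apply Rlt_le_trans with (1:=Hs), Rmin_l.
  - destruct (Req_dec s t). subst. unfold Rminus; rewrite Rplus_opp_r, Rabs_R0; apply cond_pos.
    apply P2. split. split; auto. unfold D_x, no_cond. auto. apply Rlt_le_trans with (1:=Hs), Rmin_r.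
Qed.
Lemma isd_affine (x n z : R) : is_derive (fun h => x + h * n) z n.
Proof.
  assert (H : is_derive (fun h => x + n * h) z (0 + n * 1)).
  { apply isd_plus. apply isd_const. apply is_derive_scal, isd_id. }
  replace (0 + n * 1) with n in H by ring. apply (isd_ext (fun h => x + n * h)). intros; ring. auto.
Qed.

Lemma minmax_abs a b z : Rmin a b <= z <= Rmax a b -> Rabs (z - a) <= Rabs (b - a).
Proof.
  unfold Rmin, Rmax. destruct (Rle_dec a b); intros [H1 H2];
  unfold Rabs; repeat destruct Rcase_abs; lra.
Qed.

Lemma mvt_abs (g g' : R -> R) a b M :
  (forall z, Rmin a b <= z <= Rmax a b -> is_derive g z (g' z)) ->
  (forall z, Rmin a b <= z <= Rmax a b -> Rabs (g' z) <= M) ->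
  Rabs (g b - g a) <= M * Rabs (b - a).
Proof.
  intros Hd Hb.
  destruct (MVT_gen g a b g') as [c [Hc E]].
  - intros z Hz. apply Hd. lra.
  - intros z Hz. apply (isd_cont g z (g' z)). apply Hd. lra.
  - rewrite E, Rabs_mult. apply Rmult_le_compat_r. apply Rabs_pos. apply Hb; auto.
Qed.

Lemma mvt_low (g g' : R -> R) a b m : a <= b ->
  (forall z, a <= z <= b -> is_derive g z (g' z)) ->
  (forall z, a <= z <= b -> m <= g' z) ->
  m * (b - a) <= g b - g a.
Proof.
  intros Hab Hd Hb.
  assert (Rmin a b = a) by (apply Rmin_left; auto).
  assert (Rmax a b = b) by (apply Rmax_right; auto).
  destruct (MVT_gen g a b g') as [c [Hc E]].
  - intros z Hz. apply Hd. lra.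
  - intros z Hz. apply (isd_cont g z (g' z)). apply Hd. lra.
  - rewrite E. apply Rmult_le_compat_r. lra. apply Hb. lra.
Qed.

Lemma diff_partials (f f1 f2 : R -> R -> R) x y :
  locally_2d (fun u v => is_derive (fun z => f z v) u (f1 u v) /\
                         is_derive (fun z => f u z) v (f2 u v)) x y ->
  continuity_2d_pt f1 x y -> continuity_2d_pt f2 x y ->
  differentiable_pt_lim f x y (f1 x y) (f2 x y).
Proof.
  intros [d0 Hd0] H1 H2 eps.
  destruct (H1 (pos_div_2 eps)) as [d1 Hd1].
  destruct (H2 (pos_div_2 eps)) as [d2 Hd2].
  assert (Hpos : 0 < Rmin d0 (Rmin d1 d2)).
  { apply Rmin_pos. apply cond_pos. apply Rmin_pos; apply cond_pos. }
  exists (mkposreal _ Hpos). simpl. intros u v Hu Hv.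
  assert (m0 : Rmin d0 (Rmin d1 d2) <= d0) by apply Rmin_l.
  assert (m1 : Rmin d0 (Rmin d1 d2) <= d1) by (eapply Rle_trans; [apply Rmin_r| apply Rmin_l]).
  assert (m2 : Rmin d0 (Rmin d1 d2) <= d2) by (eapply Rle_trans; [apply Rmin_r| apply Rmin_r]).
  assert (B1 : Rabs ((f u v - f1 x y * u) - (f x v - f1 x y * x)) <= eps / 2 * Rabs (u - x)).
  { apply (mvt_abs (fun z => f z v - f1 x y * z) (fun z => f1 z v - f1 x y * 1)).
    - intros z Hz. apply isd_minus. apply Hd0.
      apply Rle_lt_trans with (Rabs (u - x)). apply minmax_abs; auto. lra. lra.
      apply is_derive_scal. apply isd_id.
    - intros z Hz. rewrite Rmult_1_r. apply Rlt_le. apply Hd1.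
      apply Rle_lt_trans with (Rabs (u - x)). apply minmax_abs; auto. lra. lra. }
  assert (B2 : Rabs ((f x v - f2 x y * v) - (f x y - f2 x y * y)) <= eps / 2 * Rabs (v - y)).
  { apply (mvt_abs (fun z => f x z - f2 x y * z) (fun z => f2 x z - f2 x y * 1)).
    - intros z Hz. apply isd_minus. apply Hd0.
      unfold Rminus; rewrite Rplus_opp_r, Rabs_R0; apply cond_pos.
      apply Rle_lt_trans with (Rabs (v - y)). apply minmax_abs; auto. lra.
      apply is_derive_scal. apply isd_id.
    - intros z Hz. rewrite Rmult_1_r. apply Rlt_le. apply Hd2.
      unfold Rminus; rewrite Rplus_opp_r, Rabs_R0; apply cond_pos.
      apply Rle_lt_trans with (Rabs (v - y)). apply minmax_abs; auto. lra. }
  replace (f u v - f x y - (f1 x y * (u - x) + f2 x y * (v - y))) with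
    (((f u v - f1 x y * u) - (f x v - f1 x y * x)) + ((f x v - f2 x y * v) - (f x y - f2 x y * y))) by ring.
  eapply Rle_trans. apply Rabs_triang.
  assert (Rabs (u - x) <= Rmax (Rabs (u - x)) (Rabs (v - y))) by apply Rmax_l.
  assert (Rabs (v - y) <= Rmax (Rabs (u - x)) (Rabs (v - y))) by apply Rmax_r.
  assert (0 < eps) by apply cond_pos.
  assert (eps / 2 * Rabs (u - x) <= eps / 2 * Rmax (Rabs (u - x)) (Rabs (v - y))) by (apply Rmult_le_compat_l; lra).
  assert (eps / 2 * Rabs (v - y) <= eps / 2 * Rmax (Rabs (u - x)) (Rabs (v - y))) by (apply Rmult_le_compat_l; lra).
  lra.
Qed.

Definition Dopen (D : R -> R -> Prop) := forall s t, D s t -> locally_2d D s t.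

Definition C1f (D : R -> R -> Prop) (f f1 f2 : R -> R -> R) := forall s t, D s t ->
  is_derive (fun u => f u t) s (f1 s t) /\ is_derive (fun v => f s v) t (f2 s t) /\
  continuity_2d_pt f s t /\ continuity_2d_pt f1 s t /\ continuity_2d_pt f2 s t.

Ltac sp5 := split; [|split; [|split; [|split]]].

Section C1.
Variable D : R -> R -> Prop.

Lemma C1f_plus f f1 f2 g g1 g2 : C1f D f f1 f2 -> C1f D g g1 g2 ->
  C1f D (fun s t => f s t + g s t) (fun s t => f1 s t + g1 s t) (fun s t => f2 s t + g2 s t).
Proof.
  intros Hf Hg s t Hd. destruct (Hf s t Hd) as [a1 [a2 [a3 [a4 a5]]]].
  destruct (Hg s t Hd) as [b1 [b2 [b3 [b4 b5]]]].
  sp5; try apply isd_plus; auto; apply continuity_2d_pt_plus; auto.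
Qed.
Lemma C1f_minus f f1 f2 g g1 g2 : C1f D f f1 f2 -> C1f D g g1 g2 ->
  C1f D (fun s t => f s t - g s t) (fun s t => f1 s t - g1 s t) (fun s t => f2 s t - g2 s t).
Proof.
  intros Hf Hg s t Hd. destruct (Hf s t Hd) as [a1 [a2 [a3 [a4 a5]]]].
  destruct (Hg s t Hd) as [b1 [b2 [b3 [b4 b5]]]].
  sp5; try apply isd_minus; auto; apply continuity_2d_pt_minus; auto.
Qed.
Lemma C1f_opp f f1 f2 : C1f D f f1 f2 ->
  C1f D (fun s t => - f s t) (fun s t => - f1 s t) (fun s t => - f2 s t).
Proof.
  intros Hf s t Hd. destruct (Hf s t Hd) as [a1 [a2 [a3 [a4 a5]]]].
  sp5; try apply isd_opp; auto; apply continuity_2d_pt_opp; auto.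
Qed.
Lemma C1f_mult f f1 f2 g g1 g2 : C1f D f f1 f2 -> C1f D g g1 g2 ->
  C1f D (fun s t => f s t * g s t) (fun s t => f1 s t * g s t + f s t * g1 s t)
        (fun s t => f2 s t * g s t + f s t * g2 s t).
Proof.
  intros Hf Hg s t Hd. destruct (Hf s t Hd) as [a1 [a2 [a3 [a4 a5]]]].
  destruct (Hg s t Hd) as [b1 [b2 [b3 [b4 b5]]]].
  sp5.
  - apply (isd_mult (fun u => f u t) (fun u => g u t)); auto.
  - apply (isd_mult (fun u => f s u) (fun u => g s u)); auto.
  - apply continuity_2d_pt_mult; auto.
  - apply continuity_2d_pt_plus; apply continuity_2d_pt_mult; auto.
  - apply continuity_2d_pt_plus; apply continuity_2d_pt_mult; auto.
Qed.
Lemma C1f_inv f f1 f2 : C1f D f f1 f2 -> (forall s t, D s t -> f s t <> 0) ->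
  C1f D (fun s t => / f s t) (fun s t => - f1 s t / (f s t * f s t))
        (fun s t => - f2 s t / (f s t * f s t)).
Proof.
  intros Hf Hn s t Hd. destruct (Hf s t Hd) as [a1 [a2 [a3 [a4 a5]]]].
  assert (Hn' := Hn s t Hd).
  assert (ff : f s t * f s t <> 0) by (apply Rmult_integral_contrapositive; auto).
  sp5.
  - apply (isd_inv (fun u => f u t)); auto.
  - apply (isd_inv (fun u => f s u)); auto.
  - apply continuity_2d_pt_inv; auto.
  - apply continuity_2d_pt_mult. apply continuity_2d_pt_opp; auto.
    apply continuity_2d_pt_inv; auto. apply continuity_2d_pt_mult; auto.
  - apply continuity_2d_pt_mult. apply continuity_2d_pt_opp; auto.
    apply continuity_2d_pt_inv; auto. apply continuity_2d_pt_mult; auto.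
Qed.
Lemma C1f_sqrt f f1 f2 : C1f D f f1 f2 -> (forall s t, D s t -> 0 < f s t) ->
  C1f D (fun s t => sqrt (f s t)) (fun s t => f1 s t / (2 * sqrt (f s t)))
        (fun s t => f2 s t / (2 * sqrt (f s t))).
Proof.
  intros Hf Hp s t Hd. destruct (Hf s t Hd) as [a1 [a2 [a3 [a4 a5]]]].
  assert (Hp' := Hp s t Hd).
  assert (sq : 2 * sqrt (f s t) <> 0).
  { apply Rgt_not_eq. apply Rmult_lt_0_compat. lra. apply sqrt_lt_R0; auto. }
  assert (cs : continuity_2d_pt (fun s t => sqrt (f s t)) s t).
  { apply continuity_1d_2d_pt_comp; auto. apply continuity_pt_sqrt. lra. }
  sp5; auto.
  - apply (isd_sqrt (fun u => f u t)); auto.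
  - apply (isd_sqrt (fun u => f s u)); auto.
  - apply continuity_2d_pt_mult; auto. apply continuity_2d_pt_inv; auto.
    apply continuity_2d_pt_mult; auto. apply continuity_2d_pt_const.
  - apply continuity_2d_pt_mult; auto. apply continuity_2d_pt_inv; auto.
    apply continuity_2d_pt_mult; auto. apply continuity_2d_pt_const.
Qed.
Lemma C1f_ext f g f1 f2 : (forall s t, f s t = g s t) -> C1f D f f1 f2 -> C1f D g f1 f2.
Proof.
  intros E Hf s t Hd. destruct (Hf s t Hd) as [a1 [a2 [a3 [a4 a5]]]].
  sp5; auto.
  - apply (isd_ext (fun u => f u t)); auto.
  - apply (isd_ext (fun u => f s u)); auto.
  - apply (continuity_2d_pt_ext f); auto.
Qed.
Lemma C1f_partials f f1 f2 g1 g2 : Dopen D -> C1f D f f1 f2 ->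
  (forall s t, D s t -> f1 s t = g1 s t /\ f2 s t = g2 s t) -> C1f D f g1 g2.
Proof.
  intros Ho Hf E s t Hd. destruct (Hf s t Hd) as [a1 [a2 [a3 [a4 a5]]]].
  destruct (E s t Hd) as [e1 e2].
  sp5; auto.
  - rewrite <- e1; auto.
  - rewrite <- e2; auto.
  - apply (continuity_2d_pt_ext_loc f1); auto.
    apply (locally_2d_impl D). apply locally_2d_forall. intros u v Hu. apply E; auto. apply Ho; auto.
  - apply (continuity_2d_pt_ext_loc f2); auto.
    apply (locally_2d_impl D). apply locally_2d_forall. intros u v Hu. apply E; auto. apply Ho; auto.
Qed.
Lemma C1f_diff f f1 f2 s t : Dopen D -> C1f D f f1 f2 -> D s t ->
  differentiable_pt_lim f s t (f1 s t) (f2 s t).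
Proof.
  intros Ho Hf Hd. apply diff_partials.
  - apply (locally_2d_impl D). apply locally_2d_forall. intros u v Hu.
    destruct (Hf u v Hu) as [a1 [a2 _]]; auto. apply Ho; auto.
  - apply (Hf s t Hd).
  - apply (Hf s t Hd).
Qed.
Lemma C1f_of_C1 (f : R -> R -> R) : C1_on D f -> C1f D f (d1 f) (d2 f).
Proof.
  intros [H0 [H1 [H2 H3]]] s t Hd. destruct (H1 s t Hd) as [e1 e2].
  sp5.
  - apply (Derive_correct (fun u => f u t)); auto.
  - apply (Derive_correct (fun u => f s u)); auto.
  - apply (c2d_of_C0 D); auto.
  - apply (c2d_of_C0 D); auto.
  - apply (c2d_of_C0 D); auto.
Qed.
Lemma C1f_const c : C1f D (fun _ _ => c) (fun _ _ => 0) (fun _ _ => 0).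
Proof. intros s t Hd. sp5; try apply isd_const; apply continuity_2d_pt_const. Qed.
End C1.

Lemma C1f_comp1 (D : R -> R -> Prop) (k k' : R -> R) f f1 f2 : C1f D f f1 f2 ->
  (forall s t, D s t -> is_derive k (f s t) (k' (f s t)) /\ continuity_pt k' (f s t)) ->
  C1f D (fun s t => k (f s t)) (fun s t => k' (f s t) * f1 s t) (fun s t => k' (f s t) * f2 s t).
Proof.
  intros Hf Hk s t Hd. destruct (Hf s t Hd) as [a1 [a2 [a3 [a4 a5]]]].
  destruct (Hk s t Hd) as [k1 k2].
  sp5.
  - apply (isd_comp k (fun u => f u t)); auto.
  - apply (isd_comp k (fun u => f s u)); auto.
  - apply continuity_1d_2d_pt_comp; auto. apply (isd_cont k _ _ k1).
  - apply continuity_2d_pt_mult; auto. apply continuity_1d_2d_pt_comp; auto.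
  - apply continuity_2d_pt_mult; auto. apply continuity_1d_2d_pt_comp; auto.
Qed.

Lemma C1f_eqD (D : R -> R -> Prop) f g f1 f2 : Dopen D -> (forall s t, D s t -> f s t = g s t) ->
  C1f D f f1 f2 -> C1f D g f1 f2.
Proof.
  intros Ho E Hf s t Hd. destruct (Hf s t Hd) as [a1 [a2 [a3 [a4 a5]]]].
  assert (L := Ho s t Hd).
  sp5; auto.
  - apply (is_derive_ext_loc (fun u => f u t)); auto.
    apply (filter_imp (fun u => D u t)). intros; auto. apply (locally_2d_1d_const_y D); auto.
  - apply (is_derive_ext_loc (fun u => f s u)); auto.
    apply (filter_imp (fun u => D s u)). intros; auto. apply (locally_2d_1d_const_x D); auto.
  - apply (continuity_2d_pt_ext_loc f); auto.
    apply (locally_2d_impl D); auto. apply locally_2d_forall. auto.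
Qed.

Lemma C1f_to_C1 (D : R -> R -> Prop) f f1 f2 : Dopen D -> C1f D f f1 f2 -> C1_on D f.
Proof.
  intros Ho Hf. split; [|split; [|split]].
  - apply C0_of_c2d. intros a b Hd. apply (Hf a b Hd).
  - intros a b Hd. destruct (Hf a b Hd) as [a1 [a2 _]]. split; eexists; eauto.
  - apply C0_of_c2d. intros a b Hd. apply (continuity_2d_pt_ext_loc f1).
    apply (locally_2d_impl D); auto. apply locally_2d_forall. intros u v Hu.
    symmetry. apply is_derive_unique. apply (Hf u v Hu). apply (Hf a b Hd).
  - apply C0_of_c2d. intros a b Hd. apply (continuity_2d_pt_ext_loc f2).
    apply (locally_2d_impl D); auto. apply locally_2d_forall. intros u v Hu.
    symmetry. apply is_derive_unique. apply (Hf u v Hu). apply (Hf a b Hd).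
Qed.

Lemma loc_interval (a b t : R) : a < t < b -> locally t (fun v => a < v < b).
Proof. intros H. apply (open_and _ _ (open_gt a) (open_lt b)). auto. Qed.

Lemma strip_open eps : Dopen (strip eps).
Proof.
  intros s t [H1 H2].
  assert (P : 0 < Rmin (eps - t) (t + eps)) by (apply Rmin_pos; lra).
  exists (mkposreal _ P). simpl. intros u v _ Hv. unfold strip.
  assert (Rmin (eps - t) (t + eps) <= eps - t) by apply Rmin_l.
  assert (Rmin (eps - t) (t + eps) <= t + eps) by apply Rmin_r.
  unfold Rabs in Hv; destruct Rcase_abs in Hv; lra.
Qed.

Lemma solve2 a b c d x y e1 e2 : x * a + y * c = e1 -> x * b + y * d = e2 ->
  a * d - b * c <> 0 ->
  x = (e1 * d - e2 * c) / (a * d - b * c) /\ y = (a * e2 - b * e1) / (a * d - b * c).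
Proof.
  intros H1 H2 HJ. split.
  - apply (Rmult_eq_reg_r (a * d - b * c)); auto. unfold Rdiv. rewrite Rmult_assoc, Rinv_l; auto.
    rewrite <- H1, <- H2. ring.
  - apply (Rmult_eq_reg_r (a * d - b * c)); auto. unfold Rdiv. rewrite Rmult_assoc, Rinv_l; auto.
    rewrite <- H1, <- H2. ring.
Qed.

Section Setting.
Variables (eps : R) (X Y S T : R -> R -> R).
Hypothesis HD : orient_C2_diffeo eps X Y S T.
Hypothesis Hopen : Dopen (image_Phi eps X Y).

Local Notation St := (strip eps).
Local Notation Om := (image_Phi eps X Y).

Lemma hX : C2_on St X. Proof. apply HD. Qed.
Lemma hY : C2_on St Y. Proof. apply HD. Qed.
Lemma hS : C2_on Om S. Proof. apply HD. Qed.
Lemma hT : C2_on Om T. Proof. apply HD. Qed.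
Lemma hinv1 sg t : St sg t -> S (X sg t) (Y sg t) = sg /\ T (X sg t) (Y sg t) = t.
Proof. apply HD. Qed.
Lemma hinv2 x y : Om x y -> St (S x y) (T x y) /\ X (S x y) (T x y) = x /\ Y (S x y) (T x y) = y.
Proof. apply HD. Qed.
Lemma hjac sg t : St sg t -> jac X Y sg t > 0.
Proof. apply HD. Qed.

Lemma Om_of sg t : St sg t -> Om (X sg t) (Y sg t).
Proof. intros [H1 H2]. exists sg, t. auto. Qed.

Lemma CX : C1f St X (d1 X) (d2 X). Proof. apply C1f_of_C1, hX. Qed.
Lemma CY : C1f St Y (d1 Y) (d2 Y). Proof. apply C1f_of_C1, hY. Qed.
Lemma CX1 : C1f St (d1 X) (d1 (d1 X)) (d2 (d1 X)). Proof. apply C1f_of_C1, hX. Qed.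
Lemma CX2 : C1f St (d2 X) (d1 (d2 X)) (d2 (d2 X)). Proof. apply C1f_of_C1, hX. Qed.
Lemma CY1 : C1f St (d1 Y) (d1 (d1 Y)) (d2 (d1 Y)). Proof. apply C1f_of_C1, hY. Qed.
Lemma CY2 : C1f St (d2 Y) (d1 (d2 Y)) (d2 (d2 Y)). Proof. apply C1f_of_C1, hY. Qed.
Lemma CS : C1f Om S (d1 S) (d2 S). Proof. apply C1f_of_C1, hS. Qed.
Lemma CT : C1f Om T (d1 T) (d2 T). Proof. apply C1f_of_C1, hT. Qed.
Lemma CT1 : C1f Om (d1 T) (d1 (d1 T)) (d2 (d1 T)). Proof. apply C1f_of_C1, hT. Qed.
Lemma CT2 : C1f Om (d2 T) (d1 (d2 T)) (d2 (d2 T)). Proof. apply C1f_of_C1, hT. Qed.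

Lemma inv_first sg t : St sg t ->
  let J := jac X Y sg t in
  d1 T (X sg t) (Y sg t) = - d1 Y sg t / J /\ d2 T (X sg t) (Y sg t) = d1 X sg t / J /\
  d1 S (X sg t) (Y sg t) = d2 Y sg t / J /\ d2 S (X sg t) (Y sg t) = - d2 X sg t / J.
Proof.
  intros Hst J. assert (Hom := Om_of sg t Hst).
  assert (HJ : J <> 0) by (apply Rgt_not_eq, hjac; auto).
  assert (DT := C1f_diff Om T _ _ _ _ Hopen CT Hom).
  assert (DS := C1f_diff Om S _ _ _ _ Hopen CS Hom).
  destruct (CX sg t Hst) as [xa [xb _]]. destruct (CY sg t Hst) as [ya [yb _]].
  assert (E1 : forall (F : R -> R -> R), differentiable_pt_lim F (X sg t) (Y sg t) (d1 F (X sg t) (Y sg t)) (d2 F (X sg t) (Y sg t)) ->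
     is_derive (fun u => F (X u t) (Y u t)) sg (d1 F (X sg t) (Y sg t) * d1 X sg t + d2 F (X sg t) (Y sg t) * d1 Y sg t)).
  { intros F DF. apply is_derive_Reals. apply (derivable_pt_lim_comp_2d F (fun u => X u t) (fun u => Y u t)); auto;
    apply is_derive_Reals; auto. }
  assert (E2 : forall (F : R -> R -> R), differentiable_pt_lim F (X sg t) (Y sg t) (d1 F (X sg t) (Y sg t)) (d2 F (X sg t) (Y sg t)) ->
     is_derive (fun v => F (X sg v) (Y sg v)) t (d1 F (X sg t) (Y sg t) * d2 X sg t + d2 F (X sg t) (Y sg t) * d2 Y sg t)).
  { intros F DF. apply is_derive_Reals. apply (derivable_pt_lim_comp_2d F (fun v => X sg v) (fun v => Y sg v)); auto;
    apply is_derive_Reals; auto. }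
  assert (T1 : d1 T (X sg t) (Y sg t) * d1 X sg t + d2 T (X sg t) (Y sg t) * d1 Y sg t = 0).
  { apply (isd_unique (fun u => T (X u t) (Y u t)) sg). apply E1; auto.
    apply (isd_ext (fun _ => t)). intros u. symmetry. apply hinv1. apply Hst. apply isd_const. }
  assert (T2 : d1 T (X sg t) (Y sg t) * d2 X sg t + d2 T (X sg t) (Y sg t) * d2 Y sg t = 1).
  { apply (isd_unique (fun v => T (X sg v) (Y sg v)) t). apply E2; auto.
    apply (is_derive_ext_loc (fun v => v)). 
    apply (filter_imp (fun v => -eps < v < eps)). intros v Hv. symmetry. apply hinv1. apply Hv.
    apply loc_interval. apply Hst. apply isd_id. }
  assert (S1 : d1 S (X sg t) (Y sg t) * d1 X sg t + d2 S (X sg t) (Y sg t) * d1 Y sg t = 1).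
  { apply (isd_unique (fun u => S (X u t) (Y u t)) sg). apply E1; auto.
    apply (is_derive_ext_loc (fun u => u)).
    apply (filter_imp (fun v => True)). intros v _. symmetry. apply hinv1. apply Hst.
    apply filter_true. apply isd_id. }
  assert (S2 : d1 S (X sg t) (Y sg t) * d2 X sg t + d2 S (X sg t) (Y sg t) * d2 Y sg t = 0).
  { apply (isd_unique (fun v => S (X sg v) (Y sg v)) t). apply E2; auto.
    apply (is_derive_ext_loc (fun _ => sg)).
    apply (filter_imp (fun v => -eps < v < eps)). intros v Hv. symmetry. apply hinv1. apply Hv.
    apply loc_interval. apply Hst. apply isd_const. }
  unfold J, jac in *.
  destruct (solve2 _ _ _ _ _ _ _ _ T1 T2 HJ) as [e1 e2].
  destruct (solve2 _ _ _ _ _ _ _ _ S1 S2 HJ) as [e3 e4].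
  rewrite e1, e2, e3, e4. repeat split; field; auto.
Qed.

End Setting.

Definition Jd1 (X Y : R -> R -> R) s t :=
  (d1 (d1 X) s t * d2 Y s t + d1 X s t * d1 (d2 Y) s t) - (d1 (d2 X) s t * d1 Y s t + d2 X s t * d1 (d1 Y) s t).
Definition Jd2 (X Y : R -> R -> R) s t :=
  (d2 (d1 X) s t * d2 Y s t + d1 X s t * d2 (d2 Y) s t) - (d2 (d2 X) s t * d1 Y s t + d2 X s t * d2 (d1 Y) s t).
Definition Qf (X Y : R -> R -> R) s t := d1 X s t ^ 2 + d1 Y s t ^ 2.
Definition Qd1 (X Y : R -> R -> R) s t :=
  (d1 (d1 X) s t * d1 X s t + d1 X s t * d1 (d1 X) s t) + (d1 (d1 Y) s t * d1 Y s t + d1 Y s t * d1 (d1 Y) s t).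
Definition Qd2 (X Y : R -> R -> R) s t :=
  (d2 (d1 X) s t * d1 X s t + d1 X s t * d2 (d1 X) s t) + (d2 (d1 Y) s t * d1 Y s t + d1 Y s t * d2 (d1 Y) s t).
Definition spd1 X Y s t := Qd1 X Y s t / (2 * sqrt (Qf X Y s t)).
Definition spd2 X Y s t := Qd2 X Y s t / (2 * sqrt (Qf X Y s t)).
Definition phd1 X Y s t := Jd1 X Y s t * / speed X Y s t + jac X Y s t * (- spd1 X Y s t / (speed X Y s t * speed X Y s t)).
Definition phd2 X Y s t := Jd2 X Y s t * / speed X Y s t + jac X Y s t * (- spd2 X Y s t / (speed X Y s t * speed X Y s t)).
Definition T1d1 X Y s t := d1 (d1 X) s t * / speed X Y s t + d1 X s t * (- spd1 X Y s t / (speed X Y s t * speed X Y s t)).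
Definition T2d1 X Y s t := d1 (d1 Y) s t * / speed X Y s t + d1 Y s t * (- spd1 X Y s t / (speed X Y s t * speed X Y s t)).
Definition T1d2 X Y s t := d2 (d1 X) s t * / speed X Y s t + d1 X s t * (- spd2 X Y s t / (speed X Y s t * speed X Y s t)).
Definition T2d2 X Y s t := d2 (d1 Y) s t * / speed X Y s t + d1 Y s t * (- spd2 X Y s t / (speed X Y s t * speed X Y s t)).
Definition Fc (X Y : R -> R -> R) s t := - d1 Y s t / jac X Y s t.
Definition Fcd1 X Y s t := (- d1 (d1 Y) s t) * / jac X Y s t + (- d1 Y s t) * (- Jd1 X Y s t / (jac X Y s t * jac X Y s t)).
Definition Fcd2 X Y s t := (- d2 (d1 Y) s t) * / jac X Y s t + (- d1 Y s t) * (- Jd2 X Y s t / (jac X Y s t * jac X Y s t)).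
Definition Fd (X Y : R -> R -> R) s t := d1 X s t / jac X Y s t.
Definition Fdd1 X Y s t := d1 (d1 X) s t * / jac X Y s t + d1 X s t * (- Jd1 X Y s t / (jac X Y s t * jac X Y s t)).
Definition Fdd2 X Y s t := d2 (d1 X) s t * / jac X Y s t + d1 X s t * (- Jd2 X Y s t / (jac X Y s t * jac X Y s t)).

Lemma Qpos a b c d : a * d - b * c > 0 -> 0 < a ^ 2 + c ^ 2.
Proof.
  intros H. destruct (Req_dec a 0) as [Ha|Ha].
  - subst. destruct (Req_dec c 0) as [Hc|Hc]. subst. lra.
    assert (0 < c ^ 2) by (apply pow2_gt_0; auto). nra.
  - assert (0 < a ^ 2) by (apply pow2_gt_0; auto). nra.
Qed.

Section Setting2.
Variables (eps : R) (X Y S T : R -> R -> R).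
Hypothesis HD : orient_C2_diffeo eps X Y S T.
Local Notation St := (strip eps).

Lemma Q_pos s t : St s t -> 0 < Qf X Y s t.
Proof. intros H. apply (Qpos _ (d2 X s t) _ (d2 Y s t)). apply (hjac eps X Y S T HD); auto. Qed.
Lemma speed_pos s t : St s t -> 0 < speed X Y s t.
Proof. intros H. apply sqrt_lt_R0. apply Q_pos; auto. Qed.
Lemma jac_neq s t : St s t -> jac X Y s t <> 0.
Proof. intros H. apply Rgt_not_eq. apply (hjac eps X Y S T HD); auto. Qed.

Lemma CJ : C1f St (jac X Y) (Jd1 X Y) (Jd2 X Y).
Proof.
  apply (C1f_minus St _ _ _ _ _ _ (C1f_mult St _ _ _ _ _ _ (CX1 eps X Y S T HD) (CY2 eps X Y S T HD))
            (C1f_mult St _ _ _ _ _ _ (CX2 eps X Y S T HD) (CY1 eps X Y S T HD))).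
Qed.
Lemma CQ : C1f St (Qf X Y) (Qd1 X Y) (Qd2 X Y).
Proof.
  apply (C1f_ext St (fun s t => d1 X s t * d1 X s t + d1 Y s t * d1 Y s t)).
  intros; unfold Qf; ring.
  apply (C1f_plus St _ _ _ _ _ _ (C1f_mult St _ _ _ _ _ _ (CX1 eps X Y S T HD) (CX1 eps X Y S T HD))
            (C1f_mult St _ _ _ _ _ _ (CY1 eps X Y S T HD) (CY1 eps X Y S T HD))).
Qed.
Lemma Csp : C1f St (speed X Y) (spd1 X Y) (spd2 X Y).
Proof.
  apply (C1f_sqrt St _ _ _ CQ). apply Q_pos.
Qed.
Lemma Cinvsp : C1f St (fun s t => / speed X Y s t)
   (fun s t => - spd1 X Y s t / (speed X Y s t * speed X Y s t))
   (fun s t => - spd2 X Y s t / (speed X Y s t * speed X Y s t)).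
Proof. apply (C1f_inv St _ _ _ Csp). intros s t H. apply Rgt_not_eq, speed_pos; auto. Qed.
Lemma Cinvjac : C1f St (fun s t => / jac X Y s t)
   (fun s t => - Jd1 X Y s t / (jac X Y s t * jac X Y s t))
   (fun s t => - Jd2 X Y s t / (jac X Y s t * jac X Y s t)).
Proof. apply (C1f_inv St _ _ _ CJ). apply jac_neq. Qed.
Lemma Cphi : C1f St (varphi X Y) (phd1 X Y) (phd2 X Y).
Proof. apply (C1f_mult St _ _ _ _ _ _ CJ Cinvsp). Qed.
Lemma CT1f : C1f St (T1 X Y) (T1d1 X Y) (T1d2 X Y).
Proof. apply (C1f_mult St _ _ _ _ _ _ (CX1 eps X Y S T HD) Cinvsp). Qed.
Lemma CT2f : C1f St (T2 X Y) (T2d1 X Y) (T2d2 X Y).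
Proof. apply (C1f_mult St _ _ _ _ _ _ (CY1 eps X Y S T HD) Cinvsp). Qed.
Lemma CFc : C1f St (Fc X Y) (Fcd1 X Y) (Fcd2 X Y).
Proof. apply (C1f_mult St _ _ _ _ _ _ (C1f_opp St _ _ _ (CY1 eps X Y S T HD)) Cinvjac). Qed.
Lemma CFd : C1f St (Fd X Y) (Fdd1 X Y) (Fdd2 X Y).
Proof. apply (C1f_mult St _ _ _ _ _ _ (CX1 eps X Y S T HD) Cinvjac). Qed.

End Setting2.

Section Setting3.
Variables (eps : R) (X Y S T : R -> R -> R).
Hypothesis HD : orient_C2_diffeo eps X Y S T.
Hypothesis Hopen : Dopen (image_Phi eps X Y).
Local Notation St := (strip eps).
Local Notation Om := (image_Phi eps X Y).

Lemma first_Om x y : Om x y ->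
  d1 T x y = Fc X Y (S x y) (T x y) /\ d2 T x y = Fd X Y (S x y) (T x y) /\
  d1 S x y = d2 Y (S x y) (T x y) / jac X Y (S x y) (T x y) /\
  d2 S x y = - d2 X (S x y) (T x y) / jac X Y (S x y) (T x y).
Proof.
  intros H. destruct (hinv2 eps X Y S T HD x y H) as [Hs [E1 E2]].
  assert (K := inv_first eps X Y S T HD Hopen _ _ Hs). simpl in K.
  rewrite E1, E2 in K. unfold Fc, Fd. exact K.
Qed.

Lemma loc_Om_y x y : Om x y -> locally x (fun u => Om u y).
Proof. intros H. apply (locally_2d_1d_const_y Om). apply Hopen; auto. Qed.
Lemma loc_Om_x x y : Om x y -> locally y (fun v => Om x v).
Proof. intros H. apply (locally_2d_1d_const_x Om). apply Hopen; auto. Qed.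

Lemma diff_strip F F1 F2 s t : C1f St F F1 F2 -> St s t -> differentiable_pt_lim F s t (F1 s t) (F2 s t).
Proof. intros. apply (C1f_diff St); auto. apply strip_open. Qed.

Lemma Txx x y : Om x y ->
  d1 (d1 T) x y = Fcd1 X Y (S x y) (T x y) * d1 S x y + Fcd2 X Y (S x y) (T x y) * d1 T x y.
Proof.
  intros H. destruct (hinv2 eps X Y S T HD x y H) as [Hs _].
  unfold d1 at 1. rewrite (Derive_ext_loc _ (fun u => Fc X Y (S u y) (T u y))).
  - apply is_derive_unique. apply is_derive_Reals.
    apply (derivable_pt_lim_comp_2d (Fc X Y) (fun u => S u y) (fun u => T u y)).
    apply diff_strip; auto. apply (CFc eps X Y S T HD); auto.
    apply is_derive_Reals. apply (CS eps X Y S T HD x y H).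
    apply is_derive_Reals. apply (CT eps X Y S T HD x y H).
  - apply (filter_imp (fun u => Om u y)). intros u Hu. apply first_Om; auto.
    apply loc_Om_y; auto.
Qed.

Lemma Tyy x y : Om x y ->
  d2 (d2 T) x y = Fdd1 X Y (S x y) (T x y) * d2 S x y + Fdd2 X Y (S x y) (T x y) * d2 T x y.
Proof.
  intros H. destruct (hinv2 eps X Y S T HD x y H) as [Hs _].
  unfold d2 at 1. rewrite (Derive_ext_loc _ (fun v => Fd X Y (S x v) (T x v))).
  - apply is_derive_unique. apply is_derive_Reals.
    apply (derivable_pt_lim_comp_2d (Fd X Y) (fun v => S x v) (fun v => T x v)).
    apply diff_strip; auto. apply (CFd eps X Y S T HD); auto.
    apply is_derive_Reals. apply (CS eps X Y S T HD x y H).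
    apply is_derive_Reals. apply (CT eps X Y S T HD x y H).
  - apply (filter_imp (fun v => Om x v)). intros v Hv. apply first_Om; auto.
    apply loc_Om_x; auto.
Qed.

Lemma dvds_formula sg t : St sg t ->
  let x := X sg t in let y := Y sg t in
  dvarphi_ds X Y S T sg t =
    phd1 X Y sg t * (d1 S x y * N1 X Y sg t + d2 S x y * N2 X Y sg t) +
    phd2 X Y sg t * (d1 T x y * N1 X Y sg t + d2 T x y * N2 X Y sg t).
Proof.
  intros Hst x y. assert (Hom : Om x y) by (apply Om_of; auto).
  destruct (hinv1 eps X Y S T HD sg t Hst) as [e1 e2].
  set (n1 := N1 X Y sg t). set (n2 := N2 X Y sg t).
  unfold dvarphi_ds. fold x y n1 n2.
  apply is_derive_unique. apply is_derive_Reals.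
  assert (Lx : derivable_pt_lim (fun h => x + h * n1) 0 n1).
  { apply is_derive_Reals. apply isd_affine. }
  assert (Ly : derivable_pt_lim (fun h => y + h * n2) 0 n2).
  { apply is_derive_Reals. apply isd_affine. }
  assert (DS : differentiable_pt_lim S (x + 0 * n1) (y + 0 * n2) (d1 S x y) (d2 S x y)).
  { replace (x + 0 * n1) with x by ring. replace (y + 0 * n2) with y by ring.
    apply (C1f_diff Om); auto. apply (CS eps X Y S T HD); auto. }
  assert (DT : differentiable_pt_lim T (x + 0 * n1) (y + 0 * n2) (d1 T x y) (d2 T x y)).
  { replace (x + 0 * n1) with x by ring. replace (y + 0 * n2) with y by ring.
    apply (C1f_diff Om); auto. apply (CT eps X Y S T HD); auto. }
  assert (GS := derivable_pt_lim_comp_2d S _ _ 0 _ _ _ _ DS Lx Ly).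
  assert (GT := derivable_pt_lim_comp_2d T _ _ 0 _ _ _ _ DT Lx Ly).
  assert (DP : differentiable_pt_lim (varphi X Y) (S (x + 0 * n1) (y + 0 * n2)) (T (x + 0 * n1) (y + 0 * n2))
                 (phd1 X Y sg t) (phd2 X Y sg t)).
  { replace (x + 0 * n1) with x by ring. replace (y + 0 * n2) with y by ring.
    unfold x, y. rewrite e1, e2. apply diff_strip; auto. apply (Cphi eps X Y S T HD); auto. }
  apply (derivable_pt_lim_comp_2d (varphi X Y) _ _ 0 _ _ _ _ DP GS GT).
Qed.

End Setting3.

Definition gfun X Y S T sg t := dvarphi_ds X Y S T sg t + kappa X Y sg t * varphi X Y sg t.

Section Setting4.
Variables (eps : R) (X Y S T : R -> R -> R).
Hypothesis HD : orient_C2_diffeo eps X Y S T.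
Hypothesis Hopen : Dopen (image_Phi eps X Y).
Local Notation St := (strip eps).
Local Notation Om := (image_Phi eps X Y).

Lemma kappa_eq sg t : St sg t ->
  kappa X Y sg t = (T1d1 X Y sg t * N1 X Y sg t + T2d1 X Y sg t * N2 X Y sg t) / speed X Y sg t.
Proof.
  intros H. unfold kappa.
  replace (Derive (fun u => T1 X Y u t) sg) with (T1d1 X Y sg t).
  replace (Derive (fun u => T2 X Y u t) sg) with (T2d1 X Y sg t). auto.
  symmetry; apply is_derive_unique; apply (proj1 (CT2f eps X Y S T HD sg t H)).
  symmetry; apply is_derive_unique; apply (proj1 (CT1f eps X Y S T HD sg t H)).
Qed.

Lemma spd1_eq s t : St s t -> spd1 X Y s t = (d1 X s t * d1 (d1 X) s t + d1 Y s t * d1 (d1 Y) s t) / speed X Y s t.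
Proof.
  intros H. assert (P := speed_pos eps X Y S T HD s t H). unfold spd1, Qd1, Qf, speed in *. field. lra.
Qed.
Lemma spd2_eq s t : St s t -> spd2 X Y s t = (d1 X s t * d2 (d1 X) s t + d1 Y s t * d2 (d1 Y) s t) / speed X Y s t.
Proof.
  intros H. assert (P := speed_pos eps X Y S T HD s t H). unfold spd2, Qd2, Qf, speed in *. field. lra.
Qed.
Lemma speed_sq s t : speed X Y s t * speed X Y s t = d1 X s t ^ 2 + d1 Y s t ^ 2.
Proof.
  unfold speed. apply sqrt_sqrt. assert (0 <= d1 X s t ^ 2) by apply pow2_ge_0.
  assert (0 <= d1 Y s t ^ 2) by apply pow2_ge_0. lra.
Qed.

Lemma core sg t : St sg t ->
  let x := X sg t in let y := Y sg t in
  d1 T x y ^ 2 + d2 T x y ^ 2 = Qf X Y sg t / (jac X Y sg t ^ 2) /\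
  d1 (d1 T) x y + d2 (d2 T) x y = - gfun X Y S T sg t * Qf X Y sg t / (jac X Y sg t ^ 2).
Proof.
  intros Hst x y. assert (Hom : Om x y) by (apply Om_of; auto).
  destruct (hinv1 eps X Y S T HD sg t Hst) as [e1 e2].
  assert (Hsp := speed_pos eps X Y S T HD sg t Hst).
  assert (HJ := jac_neq eps X Y S T HD sg t Hst).
  assert (HQ := Q_pos eps X Y S T HD sg t Hst).
  assert (HF := inv_first eps X Y S T HD Hopen sg t Hst). simpl in HF. fold x y in HF.
  destruct HF as [f1 [f2 [f3 f4]]].
  rewrite (Txx eps X Y S T HD Hopen x y Hom), (Tyy eps X Y S T HD Hopen x y Hom).
  unfold x, y. rewrite e1, e2. fold x y. rewrite f1, f2, f3, f4.
  unfold gfun. rewrite (dvds_formula eps X Y S T HD Hopen sg t Hst). fold x y.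
  rewrite f1, f2, f3, f4, (kappa_eq sg t Hst).
  assert (SS := speed_sq sg t).
  unfold phd1, phd2, T1d1, T2d1, Fcd1, Fcd2, Fdd1, Fdd2, Qf, N1, N2, varphi.
  rewrite (spd1_eq sg t Hst), (spd2_eq sg t Hst).
  unfold Jd1, Jd2 in *. unfold jac in *. unfold Qf in HQ.
  set (sp := speed X Y sg t) in *.
  set (a := d1 X sg t) in *. set (b := d2 X sg t) in *. set (c := d1 Y sg t) in *. set (d := d2 Y sg t) in *.
  set (a1 := d1 (d1 X) sg t) in *. set (a2 := d2 (d1 X) sg t) in *.
  set (b1 := d1 (d2 X) sg t) in *. set (b2 := d2 (d2 X) sg t) in *.
  set (c1 := d1 (d1 Y) sg t) in *. set (c2 := d2 (d1 Y) sg t) in *.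
  set (k1 := d1 (d2 Y) sg t) in *. set (k2 := d2 (d2 Y) sg t) in *.
  set (J := a * d - b * c) in *.
  set (J1 := a1 * d + a * k1 - (b1 * c + b * c1)).
  set (J2 := a2 * d + a * k2 - (b2 * c + b * c2)).
  split.
  - field; auto.
  - assert (K1 : ((a1 * / sp + a * (- ((a * a1 + c * c1) / sp) / (sp * sp))) * (- c / sp) +
                (c1 * / sp + c * (- ((a * a1 + c * c1) / sp) / (sp * sp))) * (a / sp)) / sp * (J / sp)
               = (a * c1 - c * a1) * J / ((sp * sp) * (sp * sp))).
    { field. lra. }
    assert (K2 : (J1 * / sp + J * (- ((a * a1 + c * c1) / sp) / (sp * sp))) *
                 (d / J * (- c / sp) + - b / J * (a / sp)) +
                 (J2 * / sp + J * (- ((a * a2 + c * c2) / sp) / (sp * sp))) *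
                 (- c / J * (- c / sp) + a / J * (a / sp))
               = (- (a * b + c * d) * (J1 * (sp * sp) - J * (a * a1 + c * c1)) +
                  (a ^ 2 + c ^ 2) * (J2 * (sp * sp) - J * (a * a2 + c * c2))) / (J * (sp * sp) * (sp * sp))).
    { field. split; auto. lra. }
    rewrite K1, K2. rewrite SS. clear K1 K2. unfold J1, J2. clearbody a b c d a1 a2 b1 b2 c1 c2 k1 k2 sp. unfold J in *. field. split; auto. lra.
Qed.

End Setting4.

Section Setting5.
Variables (eps : R) (X Y S T : R -> R -> R).
Hypothesis HD : orient_C2_diffeo eps X Y S T.
Hypothesis Hopen : Dopen (image_Phi eps X Y).
Local Notation St := (strip eps).
Local Notation Om := (image_Phi eps X Y).
Variables (h h1 h2 : R -> R).
Hypothesis Hh : forall t, -eps < t < eps -> is_derive h t (h1 t) /\ is_derive h1 t (h2 t).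

Lemma T_in x y : Om x y -> -eps < T x y < eps.
Proof. intros H. apply (hinv2 eps X Y S T HD x y H). Qed.

Lemma dU1_eq x y : Om x y -> d1 (fun u v => h (T u v)) x y = h1 (T x y) * d1 T x y.
Proof.
  intros H. apply is_derive_unique. apply (isd_comp h (fun u => T u y)).
  apply Hh, T_in; auto. apply (CT eps X Y S T HD x y H).
Qed.
Lemma dU2_eq x y : Om x y -> d2 (fun u v => h (T u v)) x y = h1 (T x y) * d2 T x y.
Proof.
  intros H. apply is_derive_unique. apply (isd_comp h (fun v => T x v)).
  apply Hh, T_in; auto. apply (CT eps X Y S T HD x y H).
Qed.

Lemma d11_eq x y : Om x y -> d1 (d1 (fun u v => h (T u v))) x y =
   h2 (T x y) * d1 T x y * d1 T x y + h1 (T x y) * d1 (d1 T) x y.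
Proof.
  intros H. unfold d1 at 1.
  rewrite (Derive_ext_loc _ (fun u => h1 (T u y) * d1 T u y)).
  - apply is_derive_unique.
    replace (h2 (T x y) * d1 T x y * d1 T x y) with ((h2 (T x y) * d1 T x y) * d1 T x y) by ring.
    apply (isd_mult (fun u => h1 (T u y)) (fun u => d1 T u y)).
    apply (isd_comp h1 (fun u => T u y)). apply Hh, T_in; auto. apply (CT eps X Y S T HD x y H).
    apply (CT1 eps X Y S T HD x y H).
  - apply (filter_imp (fun u => Om u y)). intros u Hu. apply dU1_eq; auto.
    apply (loc_Om_y eps X Y Hopen); auto.
Qed.
Lemma d22_eq x y : Om x y -> d2 (d2 (fun u v => h (T u v))) x y =
   h2 (T x y) * d2 T x y * d2 T x y + h1 (T x y) * d2 (d2 T) x y.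
Proof.
  intros H. unfold d2 at 1.
  rewrite (Derive_ext_loc _ (fun v => h1 (T x v) * d2 T x v)).
  - apply is_derive_unique.
    apply (isd_mult (fun v => h1 (T x v)) (fun v => d2 T x v)).
    apply (isd_comp h1 (fun v => T x v)). apply Hh, T_in; auto. apply (CT eps X Y S T HD x y H).
    apply (CT2 eps X Y S T HD x y H).
  - apply (filter_imp (fun v => Om x v)). intros v Hv. apply dU2_eq; auto.
    apply (loc_Om_x eps X Y Hopen); auto.
Qed.

Lemma lap_eq sg t : St sg t ->
  let x := X sg t in let y := Y sg t in
  d1 (d1 (fun u v => h (T u v))) x y + d2 (d2 (fun u v => h (T u v))) x y =
  (h2 t - h1 t * gfun X Y S T sg t) * Qf X Y sg t / (jac X Y sg t ^ 2).
Proof.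
  intros Hst x y. assert (Hom : Om x y) by (apply Om_of; auto).
  destruct (hinv1 eps X Y S T HD sg t Hst) as [e1 e2].
  rewrite d11_eq, d22_eq; auto. fold x y in e2. rewrite e2.
  destruct (core eps X Y S T HD Hopen sg t Hst) as [K1 K2]. fold x y in K1, K2.
  assert (HJ := jac_neq eps X Y S T HD sg t Hst).
  replace (h2 t * d1 T x y * d1 T x y + h1 t * d1 (d1 T) x y +
    (h2 t * d2 T x y * d2 T x y + h1 t * d2 (d2 T) x y)) with
    (h2 t * (d1 T x y ^ 2 + d2 T x y ^ 2) + h1 t * (d1 (d1 T) x y + d2 (d2 T) x y)) by ring.
  rewrite K1, K2. field. auto.
Qed.

Lemma U_C2 : (forall t, -eps < t < eps -> continuity_pt h2 t) ->
  C2_on Om (fun u v => h (T u v)).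
Proof.
  intros Hc.
  assert (CU : C1f Om (fun u v => h (T u v)) (fun u v => h1 (T u v) * d1 T u v)
                 (fun u v => h1 (T u v) * d2 T u v)).
  { apply (C1f_comp1 Om h h1 T). apply (CT eps X Y S T HD).
    intros s t H. split. apply Hh, T_in; auto. apply (isd_cont h1 _ (h2 (T s t))). apply Hh, T_in; auto. }
  assert (CH1 : C1f Om (fun u v => h1 (T u v)) (fun u v => h2 (T u v) * d1 T u v)
                 (fun u v => h2 (T u v) * d2 T u v)).
  { apply (C1f_comp1 Om h1 h2 T). apply (CT eps X Y S T HD).
    intros s t H. split. apply Hh, T_in; auto. apply Hc, T_in; auto. }
  split; [|split].
  - apply (C1f_to_C1 Om _ _ _ Hopen CU).
  - eapply (C1f_to_C1 Om _ _ _ Hopen).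
    apply (C1f_eqD Om (fun u v => h1 (T u v) * d1 T u v)). auto.
    intros s t H. symmetry. apply dU1_eq; auto.
    apply (C1f_mult Om _ _ _ _ _ _ CH1 (CT1 eps X Y S T HD)).
  - eapply (C1f_to_C1 Om _ _ _ Hopen).
    apply (C1f_eqD Om (fun u v => h1 (T u v) * d2 T u v)). auto.
    intros s t H. symmetry. apply dU2_eq; auto.
    apply (C1f_mult Om _ _ _ _ _ _ CH1 (CT2 eps X Y S T HD)).
Qed.

End Setting5.

Lemma antideriv (g : R -> R) eps : (forall t, -eps < t < eps -> continuity_pt g t) ->
  forall t, -eps < t < eps -> is_derive (fun x => RInt g 0 x) t (g t).
Proof.
  intros Hc t Ht. apply (is_derive_RInt g (fun x => RInt g 0 x) 0 t).
  - apply (filter_imp (fun b => -eps < b < eps)). intros b Hb. apply (RInt_correct (V := R_CompleteNormedModule)).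
    apply ex_RInt_continuous. intros z Hz. apply continuity_pt_filterlim. apply Hc.
    revert Hz. unfold Rmin, Rmax. destruct Rle_dec; intros; lra.
    apply loc_interval; auto.
  - apply continuity_pt_filterlim. apply Hc; auto.
Qed.

Lemma strict_incr (h h1 : R -> R) eps : (forall t, -eps < t < eps -> is_derive h t (h1 t) /\ 0 < h1 t) ->
  forall a b, -eps < a < eps -> -eps < b < eps -> a < b -> h a < h b.
Proof.
  intros H a b Ha Hb Hab.
  destruct (MVT_gen h a b h1) as [c [Hc E]].
  - intros z Hz. apply H. revert Hz. unfold Rmin, Rmax. destruct Rle_dec; intros; lra.
  - intros z Hz. apply (isd_cont h z (h1 z)). apply H. revert Hz. unfold Rmin, Rmax. destruct Rle_dec; intros; lra.
  - assert (0 < h1 c). apply H. revert Hc. unfold Rmin, Rmax. destruct Rle_dec; intros; lra.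
    assert (0 < h1 c * (b - a)) by (apply Rmult_lt_0_compat; lra). lra.
Qed.

Lemma incr_inj (h : R -> R) eps : (forall a b, -eps < a < eps -> -eps < b < eps -> a < b -> h a < h b) ->
  forall a b, -eps < a < eps -> -eps < b < eps -> h a = h b -> a = b.
Proof.
  intros H a b Ha Hb E. destruct (Rtotal_order a b) as [L|[L|L]]; auto.
  - specialize (H a b Ha Hb L). lra.
  - specialize (H b a Hb Ha L). lra.
Qed.

Definition Gexp X Y s t :=
  phd1 X Y s t * ((d2 Y s t / jac X Y s t) * N1 X Y s t + (- d2 X s t / jac X Y s t) * N2 X Y s t) +
  phd2 X Y s t * (Fc X Y s t * N1 X Y s t + Fd X Y s t * N2 X Y s t) +
  ((T1d1 X Y s t * N1 X Y s t + T2d1 X Y s t * N2 X Y s t) / speed X Y s t) * varphi X Y s t.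

Section Setting6.
Variables (eps : R) (X Y S T : R -> R -> R).
Hypothesis HD : orient_C2_diffeo eps X Y S T.
Hypothesis Hopen : Dopen (image_Phi eps X Y).
Local Notation St := (strip eps).
Local Notation Om := (image_Phi eps X Y).

Lemma gfun_Gexp s t : St s t -> gfun X Y S T s t = Gexp X Y s t.
Proof.
  intros H. unfold gfun, Gexp.
  rewrite (dvds_formula eps X Y S T HD Hopen s t H), (kappa_eq eps X Y S T HD s t H).
  destruct (inv_first eps X Y S T HD Hopen s t H) as [f1 [f2 [f3 f4]]].
  rewrite f1, f2, f3, f4. unfold Fc, Fd. reflexivity.
Qed.

Lemma Gexp_cont s t : St s t -> continuity_2d_pt (Gexp X Y) s t.
Proof.
  intros H.
  destruct (Cphi eps X Y S T HD s t H) as [_ [_ [p0 [p1 p2]]]].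
  destruct (CT1f eps X Y S T HD s t H) as [_ [_ [_ [q1 _]]]].
  destruct (CT2f eps X Y S T HD s t H) as [_ [_ [_ [r1 _]]]].
  destruct (CFc eps X Y S T HD s t H) as [_ [_ [fc _]]].
  destruct (CFd eps X Y S T HD s t H) as [_ [_ [fd _]]].
  destruct (CJ eps X Y S T HD s t H) as [_ [_ [cj _]]].
  destruct (Csp eps X Y S T HD s t H) as [_ [_ [cs _]]].
  destruct (CX2 eps X Y S T HD s t H) as [_ [_ [cb _]]].
  destruct (CY2 eps X Y S T HD s t H) as [_ [_ [cd _]]].
  destruct (CY1 eps X Y S T HD s t H) as [_ [_ [cc _]]].
  destruct (CX1 eps X Y S T HD s t H) as [_ [_ [ca _]]].
  assert (nj := jac_neq eps X Y S T HD s t H).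
  assert (ns : speed X Y s t <> 0) by (apply Rgt_not_eq, (speed_pos eps X Y S T HD); auto).
  unfold Gexp, N1, N2, Rdiv.
  repeat first [ assumption | apply continuity_2d_pt_plus | apply continuity_2d_pt_mult | apply continuity_2d_pt_opp
               | apply continuity_2d_pt_inv ].
Qed.

Lemma g0_cont t : -eps < t < eps -> continuity_pt (fun v => Gexp X Y 0 v) t.
Proof. intros H. apply c2d_line_y. apply Gexp_cont. apply H. Qed.

End Setting6.

Section Back.
Variables (eps : R) (X Y S T : R -> R -> R).
Hypothesis HD : orient_C2_diffeo eps X Y S T.
Hypothesis Hopen : Dopen (image_Phi eps X Y).
Local Notation St := (strip eps).
Local Notation Om := (image_Phi eps X Y).

Lemma back : (forall t, -eps < t < eps -> forall s1 s2, gfun X Y S T s1 t = gfun X Y S T s2 t) ->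
  exists U, harmonic_on Om U /\ no_critical_point_on Om U /\ level_curves_are eps X Y U.
Proof.
  intros Hg.
  set (g0 := fun v => Gexp X Y 0 v).
  set (H0 := fun x => RInt g0 0 x).
  set (h1 := fun x => exp (H0 x)).
  set (h := fun x => RInt h1 0 x).
  set (h2 := fun x => h1 x * g0 x).
  assert (cg0 : forall t, -eps < t < eps -> continuity_pt g0 t).
  { intros t Ht. apply (g0_cont eps X Y S T HD); auto. }
  assert (dH0 : forall t, -eps < t < eps -> is_derive H0 t (g0 t)).
  { intros t Ht. apply (antideriv g0 eps); auto. }
  assert (dh1 : forall t, -eps < t < eps -> is_derive h1 t (h2 t)).
  { intros t Ht. apply (isd_comp exp H0). apply is_derive_exp. auto. }
  assert (ch1 : forall t, -eps < t < eps -> continuity_pt h1 t).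
  { intros t Ht. apply (isd_cont h1 t (h2 t)); auto. }
  assert (dh : forall t, -eps < t < eps -> is_derive h t (h1 t)).
  { intros t Ht. apply (antideriv h1 eps); auto. }
  assert (ch2 : forall t, -eps < t < eps -> continuity_pt h2 t).
  { intros t Ht. apply continuity_pt_mult; auto. }
  assert (h1pos : forall t, 0 < h1 t) by (intros; apply exp_pos).
  assert (Hh : forall t, -eps < t < eps -> is_derive h t (h1 t) /\ is_derive h1 t (h2 t)).
  { intros; split; auto. }
  assert (inc : forall a b, -eps < a < eps -> -eps < b < eps -> a < b -> h a < h b).
  { apply (strict_incr h h1). intros; split; auto. }
  assert (inj := incr_inj h eps inc).
  exists (fun u v => h (T u v)). split; [|split].
  - split. apply (U_C2 eps X Y S T HD Hopen h h1 h2 Hh ch2).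
    intros x y Hxy.
    destruct (hinv2 eps X Y S T HD x y Hxy) as [Hs [E1 E2]].
    assert (L := lap_eq eps X Y S T HD Hopen h h1 h2 Hh (S x y) (T x y) Hs). simpl in L.
    rewrite E1, E2 in L. rewrite L.
    replace (h2 (T x y) - h1 (T x y) * gfun X Y S T (S x y) (T x y)) with 0. lra.
    unfold h2, g0. rewrite <- (gfun_Gexp eps X Y S T HD Hopen 0 (T x y)).
    rewrite (Hg (T x y) Hs 0 (S x y)). ring. apply Hs.
  - intros x y Hxy [Z1 Z2].
    rewrite (dU1_eq eps X Y S T HD h h1 h2 Hh x y Hxy) in Z1.
    rewrite (dU2_eq eps X Y S T HD h h1 h2 Hh x y Hxy) in Z2.
    destruct (hinv2 eps X Y S T HD x y Hxy) as [Hs [E1 E2]].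
    destruct (first_Om eps X Y S T HD Hopen x y Hxy) as [f1 [f2 _]].
    rewrite f1 in Z1. rewrite f2 in Z2. unfold Fc, Fd in *.
    assert (HJ := jac_neq eps X Y S T HD _ _ Hs).
    assert (HQ := Q_pos eps X Y S T HD _ _ Hs). unfold Qf in HQ.
    assert (h1 (T x y) <> 0) by (apply Rgt_not_eq, h1pos).
    apply Rmult_integral in Z1. destruct Z1 as [Z1|Z1]; [contradiction|].
    apply Rmult_integral in Z2. destruct Z2 as [Z2|Z2]; [contradiction|].
    unfold Rdiv in Z1, Z2.
    apply Rmult_integral in Z1. destruct Z1 as [Z1|Z1]; [|apply Rinv_neq_0_compat in HJ; contradiction].
    apply Rmult_integral in Z2. destruct Z2 as [Z2|Z2]; [|apply Rinv_neq_0_compat in HJ; contradiction].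
    assert (Zc : d1 Y (S x y) (T x y) = 0) by lra. rewrite Zc, Z2 in HQ. simpl in HQ. lra.
  - intros A. split.
    + intros [c [[x0 [y0 [H0m E0]]] HA]].
      destruct (hinv2 eps X Y S T HD x0 y0 H0m) as [Hs0 _].
      exists (T x0 y0). split. apply Hs0.
      intros x y. rewrite HA. split.
      * intros [Hxy Ec]. exists (S x y).
        destruct (hinv2 eps X Y S T HD x y Hxy) as [Hs [E1 E2]].
        assert (T x y = T x0 y0). apply inj; [apply Hs | apply Hs0 | lra].
        rewrite <- H. auto.
      * intros [sg [E1 E2]]. subst x y. split. apply Om_of. apply Hs0.
        rewrite <- E0. destruct (hinv1 eps X Y S T HD sg (T x0 y0)) as [_ e]. apply Hs0.
        rewrite e. auto.
    + intros [t [Ht HA]]. exists (h t). split.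
      * exists (X 0 t), (Y 0 t). split. apply Om_of. apply Ht.
        destruct (hinv1 eps X Y S T HD 0 t) as [_ e]. apply Ht. rewrite e. auto.
      * intros x y. rewrite HA. split.
        -- intros [sg [E1 E2]]. subst x y. split. apply Om_of. apply Ht.
           destruct (hinv1 eps X Y S T HD sg t) as [_ e]. apply Ht. rewrite e. auto.
        -- intros [Hxy Ec]. exists (S x y).
           destruct (hinv2 eps X Y S T HD x y Hxy) as [Hs [E1 E2]].
           assert (T x y = t). apply inj; [apply Hs | exact Ht | lra].
           rewrite <- H. auto.
Qed.
End Back.

Lemma eq_open_d (D : R -> R -> Prop) (F G : R -> R -> R) : Dopen D -> (forall x y, D x y -> F x y = G x y) ->
  forall x y, D x y -> d1 F x y = d1 G x y /\ d2 F x y = d2 G x y.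
Proof.
  intros Ho E x y H. split.
  - unfold d1. apply Derive_ext_loc. apply (filter_imp (fun u => D u y)). intros; auto.
    apply (locally_2d_1d_const_y D); auto.
  - unfold d2. apply Derive_ext_loc. apply (filter_imp (fun u => D x u)). intros; auto.
    apply (locally_2d_1d_const_x D); auto.
Qed.

Section Forward.
Variables (eps : R) (X Y S T : R -> R -> R).
Hypothesis HD : orient_C2_diffeo eps X Y S T.
Hypothesis Hopen : Dopen (image_Phi eps X Y).
Local Notation St := (strip eps).
Local Notation Om := (image_Phi eps X Y).

Lemma forward U : harmonic_on Om U -> no_critical_point_on Om U -> level_curves_are eps X Y U ->
  forall t, -eps < t < eps -> forall s1 s2, gfun X Y S T s1 t = gfun X Y S T s2 t.
Proof.
  intros [HC Hlap] Hnc Hlev.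
  assert (Hconst : forall t, -eps < t < eps -> forall sg, U (X sg t) (Y sg t) = U (X 0 t) (Y 0 t)).
  { intros t Ht sg.
    destruct (proj2 (Hlev (fun x y => exists sg, X sg t = x /\ Y sg t = y))) as [c [_ HA]].
    exists t. split; auto. intros; tauto.
    assert (A1 := proj1 (HA (X sg t) (Y sg t)) (ex_intro _ sg (conj eq_refl eq_refl))).
    assert (A2 := proj1 (HA (X 0 t) (Y 0 t)) (ex_intro _ 0 (conj eq_refl eq_refl))).
    destruct A1 as [_ A1]; destruct A2 as [_ A2]. congruence. }
  set (f := fun t => U (X 0 t) (Y 0 t)).
  assert (Hf : forall x y, Om x y -> U x y = f (T x y)).
  { intros x y H. destruct (hinv2 eps X Y S T HD x y H) as [Hs [E1 E2]].
    unfold f. rewrite <- (Hconst (T x y) Hs (S x y)). rewrite E1, E2. auto. }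
  destruct HC as [CU0 [CU1 CU2]].
  assert (CU := C1f_of_C1 Om U CU0).
  assert (CUa := C1f_of_C1 Om (d1 U) CU1).
  assert (CUb := C1f_of_C1 Om (d2 U) CU2).
  set (P := fun t => (X 0 t, Y 0 t)).
  set (f1 := fun t => d1 U (X 0 t) (Y 0 t) * d2 X 0 t + d2 U (X 0 t) (Y 0 t) * d2 Y 0 t).
  set (f2 := fun t => (d1 (d1 U) (X 0 t) (Y 0 t) * d2 X 0 t + d2 (d1 U) (X 0 t) (Y 0 t) * d2 Y 0 t) * d2 X 0 t
                      + d1 U (X 0 t) (Y 0 t) * d2 (d2 X) 0 t
                      + ((d1 (d2 U) (X 0 t) (Y 0 t) * d2 X 0 t + d2 (d2 U) (X 0 t) (Y 0 t) * d2 Y 0 t) * d2 Y 0 t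
                      + d2 U (X 0 t) (Y 0 t) * d2 (d2 Y) 0 t)).
  assert (comp : forall F F1 F2, C1f Om F F1 F2 -> forall t, -eps < t < eps ->
     is_derive (fun v => F (X 0 v) (Y 0 v)) t (F1 (X 0 t) (Y 0 t) * d2 X 0 t + F2 (X 0 t) (Y 0 t) * d2 Y 0 t)).
  { intros F F1 F2 CF t Ht. assert (St 0 t) by apply Ht.
    apply is_derive_Reals. apply (derivable_pt_lim_comp_2d F (fun v => X 0 v) (fun v => Y 0 v)).
    apply (C1f_diff Om); auto. apply Om_of; auto.
    apply is_derive_Reals. apply (CX eps X Y S T HD 0 t); auto.
    apply is_derive_Reals. apply (CY eps X Y S T HD 0 t); auto. }
  assert (Hh : forall t, -eps < t < eps -> is_derive f t (f1 t) /\ is_derive f1 t (f2 t)).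
  { intros t Ht. assert (St 0 t) by apply Ht. split.
    - apply (comp U _ _ CU t Ht).
    - unfold f1, f2.
      apply (isd_plus (fun v => d1 U (X 0 v) (Y 0 v) * d2 X 0 v) (fun v => d2 U (X 0 v) (Y 0 v) * d2 Y 0 v)).
      apply (isd_mult (fun v => d1 U (X 0 v) (Y 0 v)) (fun v => d2 X 0 v)).
      apply (comp _ _ _ CUa t Ht). apply (CX2 eps X Y S T HD 0 t); auto.
      apply (isd_mult (fun v => d2 U (X 0 v) (Y 0 v)) (fun v => d2 Y 0 v)).
      apply (comp _ _ _ CUb t Ht). apply (CY2 eps X Y S T HD 0 t); auto. }
  assert (E1 := eq_open_d Om U (fun u v => f (T u v)) Hopen Hf).
  assert (E2 : forall x y, Om x y -> d1 (d1 U) x y = d1 (d1 (fun u v => f (T u v))) x y /\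
                                     d2 (d2 U) x y = d2 (d2 (fun u v => f (T u v))) x y).
  { intros x y H. split.
    - apply (eq_open_d Om (d1 U) (d1 (fun u v => f (T u v))) Hopen); auto. intros; apply E1; auto.
    - apply (eq_open_d Om (d2 U) (d2 (fun u v => f (T u v))) Hopen); auto. intros; apply E1; auto. }
  assert (f1nz : forall t, -eps < t < eps -> f1 t <> 0).
  { intros t Ht Z. assert (Hs : St 0 t) by apply Ht.
    assert (Hom := Om_of eps X Y 0 t Hs).
    apply (Hnc _ _ Hom).
    destruct (E1 _ _ Hom) as [e1 e2]. rewrite e1, e2.
    rewrite (dU1_eq eps X Y S T HD f f1 f2 Hh _ _ Hom), (dU2_eq eps X Y S T HD f f1 f2 Hh _ _ Hom).
    destruct (hinv1 eps X Y S T HD 0 t Hs) as [_ e]. rewrite e, Z. split; ring. }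
  assert (key : forall sg t, St sg t -> gfun X Y S T sg t = f2 t / f1 t).
  { intros sg t Hs.
    assert (Hom := Om_of eps X Y sg t Hs).
    assert (L := lap_eq eps X Y S T HD Hopen f f1 f2 Hh sg t Hs). cbv zeta in L.
    destruct (E2 _ _ Hom) as [e1 e2]. rewrite <- e1, <- e2, Hlap in L; auto.
    assert (HJ := jac_neq eps X Y S T HD sg t Hs).
    assert (HQ := Q_pos eps X Y S T HD sg t Hs).
    assert (Hf1 := f1nz t Hs).
    assert (Z : f2 t - f1 t * gfun X Y S T sg t = 0).
    { assert (jac X Y sg t ^ 2 <> 0) by (apply pow_nonzero; auto).
      apply (Rmult_eq_reg_r (Qf X Y sg t / jac X Y sg t ^ 2)).
      transitivity ((f2 t - f1 t * gfun X Y S T sg t) * Qf X Y sg t / jac X Y sg t ^ 2). unfold Rdiv; ring.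
      rewrite <- L. ring.
      unfold Rdiv. apply Rmult_integral_contrapositive. split. lra. apply Rinv_neq_0_compat; auto. }
    apply (Rmult_eq_reg_r (f1 t)); [| auto]. unfold Rdiv. rewrite Rmult_assoc, Rinv_l; auto. lra. }
  intros t Ht s1 s2. rewrite (key s1 t), (key s2 t); auto.
Qed.
End Forward.

Lemma small_comb0 J K eta k1 k2 e1 e2 : 0 < J -> 0 <= K ->
  Rabs e1 <= eta -> Rabs e2 <= eta -> Rabs k1 + Rabs k2 <= K ->
  Rabs ((k1 * e1 + k2 * e2) / J) <= K * eta / J.
Proof.
  intros HJ HK H1 H2 Hk.
  unfold Rdiv. rewrite Rabs_mult, (Rabs_right (/ J)) by (apply Rle_ge, Rlt_le, Rinv_0_lt_compat; auto).
  apply Rmult_le_compat_r. left; apply Rinv_0_lt_compat; auto.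
  eapply Rle_trans. apply Rabs_triang. rewrite !Rabs_mult.
  assert (0 <= eta) by (eapply Rle_trans; [apply Rabs_pos|apply H1]).
  assert (Rabs k1 * Rabs e1 <= Rabs k1 * eta) by (apply Rmult_le_compat_l; [apply Rabs_pos| lra]).
  assert (Rabs k2 * Rabs e2 <= Rabs k2 * eta) by (apply Rmult_le_compat_l; [apply Rabs_pos| lra]).
  assert ((Rabs k1 + Rabs k2) * eta <= K * eta) by (apply Rmult_le_compat_r; lra). lra.
Qed.

Lemma small_comb J K eta k1 k2 e1 e2 : 0 < J -> 0 <= K -> eta = J / (4 * (K + 1)) ->
  Rabs e1 < eta -> Rabs e2 < eta -> Rabs k1 + Rabs k2 <= K ->
  Rabs ((k1 * e1 + k2 * e2) / J) <= 1 / 4.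
Proof.
  intros HJ HK He H1 H2 Hk.
  unfold Rdiv. rewrite Rabs_mult, (Rabs_right (/ J)) by (apply Rle_ge, Rlt_le, Rinv_0_lt_compat; auto).
  assert (A : Rabs (k1 * e1 + k2 * e2) <= K * eta).
  { eapply Rle_trans. apply Rabs_triang. rewrite !Rabs_mult.
    assert (Rabs k1 * Rabs e1 <= Rabs k1 * eta) by (apply Rmult_le_compat_l; [apply Rabs_pos| lra]).
    assert (Rabs k2 * Rabs e2 <= Rabs k2 * eta) by (apply Rmult_le_compat_l; [apply Rabs_pos| lra]).
    assert (0 < eta) by (rewrite He; apply Rdiv_lt_0_compat; lra).
    assert ((Rabs k1 + Rabs k2) * eta <= K * eta) by (apply Rmult_le_compat_r; lra). lra. }
  assert (B : K * eta * / J = K / (4 * (K + 1))) by (rewrite He; field; lra).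
  apply Rle_trans with (K * eta * / J).
  apply Rmult_le_compat_r. left; apply Rinv_0_lt_compat; auto. auto.
  rewrite B. apply (Rmult_le_reg_r (4 * (K + 1))). lra. unfold Rdiv.
  rewrite Rmult_assoc, Rinv_l by lra. lra.
Qed.

Lemma lip_cont (g : R -> R) t : (forall u v, Rabs (g u - g v) <= Rabs (u - v)) -> continuity_pt g t.
Proof.
  intros H e He. exists e. split; auto. intros u [_ Hu]. simpl in *. unfold R_dist in *.
  eapply Rle_lt_trans. apply H. auto.
Qed.

Definition clamp a b t := Rmax a (Rmin b t).
Lemma clamp_in a b t : a <= b -> a <= clamp a b t <= b.
Proof. intros H. unfold clamp, Rmax, Rmin. repeat destruct Rle_dec; lra. Qed.
Lemma clamp_id a b t : a <= t <= b -> clamp a b t = t.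
Proof. intros H. unfold clamp, Rmax, Rmin. repeat destruct Rle_dec; lra. Qed.
Lemma clamp_lip a b u v : a <= b -> Rabs (clamp a b u - clamp a b v) <= Rabs (u - v).
Proof. intros H. unfold clamp, Rmax, Rmin. repeat destruct Rle_dec; unfold Rabs; repeat destruct Rcase_abs; lra. Qed.

Lemma lin_der (f g : R -> R) z f' g' k1 k2 x y J : is_derive f z f' -> is_derive g z g' ->
  is_derive (fun w => (k1 * (f w - x) + k2 * (g w - y)) / J) z ((k1 * f' + k2 * g') / J).
Proof.
  intros Hf Hg. unfold Rdiv.
  apply (isd_ext (fun w => / J * (k1 * (f w - x) + k2 * (g w - y)))). intros; ring.
  replace ((k1 * f' + k2 * g') * / J) with (/ J * (k1 * (f' - 0) + k2 * (g' - 0))) by ring.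
  apply is_derive_scal. apply isd_plus; apply is_derive_scal; apply isd_minus; auto; apply isd_const.
Qed.

Lemma seg_in v1 v2 z t0 r : Rabs (v1 - t0) <= r -> Rabs (v2 - t0) <= r ->
  Rmin v1 v2 <= z <= Rmax v1 v2 -> Rabs (z - t0) <= r.
Proof.
  intros H1 H2 Hz. apply Rabs_le_between in H1. apply Rabs_le_between in H2.
  apply Rabs_le_between. revert Hz. unfold Rmin, Rmax. destruct Rle_dec; intros; lra.
Qed.
Lemma seg_in2 v1 v2 z t0 r : Rabs (v1 - t0) <= r -> Rabs (v2 - t0) <= r ->
  v1 <= z <= v2 -> Rabs (z - t0) <= r.
Proof.
  intros H1 H2 Hz. apply Rabs_le_between in H1. apply Rabs_le_between in H2.
  apply Rabs_le_between. lra.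
Qed.

Section Open.
Variables (eps : R) (X Y S T : R -> R -> R).
Hypothesis HD : orient_C2_diffeo eps X Y S T.
Local Notation St := (strip eps).
Local Notation Om := (image_Phi eps X Y).

Lemma Om_open : Dopen Om.
Proof.
  intros x0 y0 [s0 [t0 [Ht0 [Ex Ey]]]].
  assert (Hst0 : St s0 t0) by exact Ht0.
  assert (HJ := hjac eps X Y S T HD s0 t0 Hst0). unfold jac in HJ.
  set (a := d1 X s0 t0) in *. set (b := d2 X s0 t0) in *.
  set (c := d1 Y s0 t0) in *. set (d := d2 Y s0 t0) in *.
  set (J := a * d - b * c) in *.
  set (K := Rabs a + Rabs b + Rabs c + Rabs d).
  assert (HK : 0 <= K) by (unfold K; assert (H1:=Rabs_pos a); assert (H2:=Rabs_pos b);
     assert (H3:=Rabs_pos c); assert (H4:=Rabs_pos d); lra).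
  set (eta := J / (4 * (K + 1))).
  assert (Heta : 0 < eta) by (unfold eta; apply Rdiv_lt_0_compat; lra).
  destruct (CX1 eps X Y S T HD s0 t0 Hst0) as [_ [_ [ca _]]].
  destruct (CX2 eps X Y S T HD s0 t0 Hst0) as [_ [_ [cb _]]].
  destruct (CY1 eps X Y S T HD s0 t0 Hst0) as [_ [_ [cc _]]].
  destruct (CY2 eps X Y S T HD s0 t0 Hst0) as [_ [_ [cd _]]].
  set (e := mkposreal eta Heta).
  assert (L := locally_2d_and _ _ _ _ (strip_open eps s0 t0 Hst0)
      (locally_2d_and _ _ _ _ (ca e) (locally_2d_and _ _ _ _ (cb e)
           (locally_2d_and _ _ _ _ (cc e) (cd e))))).
  destruct L as [d0 Hd0]. simpl in Hd0.
  set (r := d0 / 2).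
  assert (Hr : 0 < r) by (unfold r; assert (H:=cond_pos d0); lra).
  assert (Hrd : r < d0) by (unfold r; assert (H:=cond_pos d0); lra).
  assert (Box : forall u v, Rabs (u - s0) <= r -> Rabs (v - t0) <= r ->
     St u v /\ Rabs (d1 X u v - a) < eta /\ Rabs (d2 X u v - b) < eta /\
     Rabs (d1 Y u v - c) < eta /\ Rabs (d2 Y u v - d) < eta).
  { intros u v Hu Hv. apply Hd0; lra. }
  set (del := r * J / (8 * (K + 1))).
  assert (Hdel : 0 < del) by (unfold del; apply Rdiv_lt_0_compat; [apply Rmult_lt_0_compat|]; lra).
  exists (mkposreal del Hdel). simpl. intros x' y' Hx' Hy'.
  set (A := fun u v => (d * (X u v - x') + - b * (Y u v - y')) / J).
  set (B := fun u v => (- c * (X u v - x') + a * (Y u v - y')) / J).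
  assert (Hb : Rabs d + Rabs (- b) <= K) by (rewrite Rabs_Ropp; unfold K;
     assert (H1:=Rabs_pos a); assert (H3:=Rabs_pos c); lra).
  assert (Hc : Rabs (- c) + Rabs a <= K) by (rewrite Rabs_Ropp; unfold K;
     assert (H1:=Rabs_pos b); assert (H3:=Rabs_pos d); lra).
  assert (Jn : J <> 0) by lra.
  assert (dAu : forall u v, Rabs (u - s0) <= r -> Rabs (v - t0) <= r ->
     is_derive (fun w => A w v) u ((d * d1 X u v + - b * d1 Y u v) / J) /\
     3 / 4 <= (d * d1 X u v + - b * d1 Y u v) / J).
  { intros u v Hu Hv. destruct (Box u v Hu Hv) as [Hs [h1 [h2 [h3 h4]]]]. split.
    - apply lin_der. apply (CX eps X Y S T HD u v Hs). apply (CY eps X Y S T HD u v Hs).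
    - replace ((d * d1 X u v + - b * d1 Y u v) / J) with (1 + (d * (d1 X u v - a) + - b * (d1 Y u v - c)) / J)
        by (unfold J; field; fold J; auto).
      assert (Q := small_comb J K eta d (- b) _ _ HJ HK eq_refl h1 h3 Hb).
      apply Rabs_le_between in Q. lra. }
  assert (dAv : forall u v, Rabs (u - s0) <= r -> Rabs (v - t0) <= r ->
     is_derive (fun w => A u w) v ((d * d2 X u v + - b * d2 Y u v) / J) /\
     Rabs ((d * d2 X u v + - b * d2 Y u v) / J) <= 1 / 4).
  { intros u v Hu Hv. destruct (Box u v Hu Hv) as [Hs [h1 [h2 [h3 h4]]]]. split.
    - apply lin_der. apply (CX eps X Y S T HD u v Hs). apply (CY eps X Y S T HD u v Hs).
    - replace ((d * d2 X u v + - b * d2 Y u v) / J) with ((d * (d2 X u v - b) + - b * (d2 Y u v - d)) / J)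
        by (unfold J; field; fold J; auto).
      apply (small_comb J K eta d (- b) _ _ HJ HK eq_refl h2 h4 Hb). }
  assert (dBu : forall u v, Rabs (u - s0) <= r -> Rabs (v - t0) <= r ->
     is_derive (fun w => B w v) u ((- c * d1 X u v + a * d1 Y u v) / J) /\
     Rabs ((- c * d1 X u v + a * d1 Y u v) / J) <= 1 / 4).
  { intros u v Hu Hv. destruct (Box u v Hu Hv) as [Hs [h1 [h2 [h3 h4]]]]. split.
    - apply lin_der. apply (CX eps X Y S T HD u v Hs). apply (CY eps X Y S T HD u v Hs).
    - replace ((- c * d1 X u v + a * d1 Y u v) / J) with ((- c * (d1 X u v - a) + a * (d1 Y u v - c)) / J)
        by (unfold J; field; fold J; auto).
      apply (small_comb J K eta (- c) a _ _ HJ HK eq_refl h1 h3 Hc). }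
  assert (dBv : forall u v, Rabs (u - s0) <= r -> Rabs (v - t0) <= r ->
     is_derive (fun w => B u w) v ((- c * d2 X u v + a * d2 Y u v) / J) /\
     3 / 4 <= (- c * d2 X u v + a * d2 Y u v) / J).
  { intros u v Hu Hv. destruct (Box u v Hu Hv) as [Hs [h1 [h2 [h3 h4]]]]. split.
    - apply lin_der. apply (CX eps X Y S T HD u v Hs). apply (CY eps X Y S T HD u v Hs).
    - replace ((- c * d2 X u v + a * d2 Y u v) / J) with (1 + (- c * (d2 X u v - b) + a * (d2 Y u v - d)) / J)
        by (unfold J; field; fold J; auto).
      assert (Q := small_comb J K eta (- c) a _ _ HJ HK eq_refl h2 h4 Hc).
      apply Rabs_le_between in Q. lra. }
  assert (A0 : Rabs (A s0 t0) <= r / 8).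
  { unfold A. rewrite Ex, Ey.
    assert (Q := small_comb0 J K del d (- b) (x0 - x') (y0 - y') HJ HK).
    eapply Rle_trans. apply Q.
    rewrite <- Rabs_Ropp. replace (- (x0 - x')) with (x' - x0) by ring. lra.
    rewrite <- Rabs_Ropp. replace (- (y0 - y')) with (y' - y0) by ring. lra. auto.
    unfold del. apply (Rmult_le_reg_r (8 * (K + 1))). lra.
    replace (K * (r * J / (8 * (K + 1))) / J * (8 * (K + 1))) with (K * r) by (field; lra).
    replace (r / 8 * (8 * (K + 1))) with (K * r + r) by field. lra. }
  assert (B0 : Rabs (B s0 t0) <= r / 8).
  { unfold B. rewrite Ex, Ey.
    assert (Q := small_comb0 J K del (- c) a (x0 - x') (y0 - y') HJ HK).
    eapply Rle_trans. apply Q.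
    rewrite <- Rabs_Ropp. replace (- (x0 - x')) with (x' - x0) by ring. lra.
    rewrite <- Rabs_Ropp. replace (- (y0 - y')) with (y' - y0) by ring. lra. auto.
    unfold del. apply (Rmult_le_reg_r (8 * (K + 1))). lra.
    replace (K * (r * J / (8 * (K + 1))) / J * (8 * (K + 1))) with (K * r) by (field; lra).
    replace (r / 8 * (8 * (K + 1))) with (K * r + r) by field. lra. }
  assert (Av : forall u v1 v2, Rabs (u - s0) <= r -> Rabs (v1 - t0) <= r -> Rabs (v2 - t0) <= r ->
     Rabs (A u v2 - A u v1) <= 1 / 4 * Rabs (v2 - v1)).
  { intros u v1 v2 Hu H1 H2.
    apply (mvt_abs (fun w => A u w) (fun w => (d * d2 X u w + - b * d2 Y u w) / J)).
    - intros z Hz. apply dAv; auto. apply (seg_in _ _ _ _ _ H1 H2 Hz).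
    - intros z Hz. apply dAv; auto. apply (seg_in _ _ _ _ _ H1 H2 Hz). }
  assert (Bu : forall u1 u2 v, Rabs (u1 - s0) <= r -> Rabs (u2 - s0) <= r -> Rabs (v - t0) <= r ->
     Rabs (B u2 v - B u1 v) <= 1 / 4 * Rabs (u2 - u1)).
  { intros u1 u2 v H1 H2 Hv.
    apply (mvt_abs (fun w => B w v) (fun w => (- c * d1 X w v + a * d1 Y w v) / J)).
    - intros z Hz. apply dBu; auto. apply (seg_in _ _ _ _ _ H1 H2 Hz).
    - intros z Hz. apply dBu; auto. apply (seg_in _ _ _ _ _ H1 H2 Hz). }
  assert (Au : forall u1 u2 v, u1 <= u2 -> Rabs (u1 - s0) <= r -> Rabs (u2 - s0) <= r -> Rabs (v - t0) <= r ->
     3 / 4 * (u2 - u1) <= A u2 v - A u1 v).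
  { intros u1 u2 v Hle H1 H2 Hv.
    apply (mvt_low (fun w => A w v) (fun w => (d * d1 X w v + - b * d1 Y w v) / J)); auto.
    - intros z Hz. apply dAu; auto. apply (seg_in2 _ _ _ _ _ H1 H2 Hz).
    - intros z Hz. apply dAu; auto. apply (seg_in2 _ _ _ _ _ H1 H2 Hz). }
  assert (Bv : forall u v1 v2, v1 <= v2 -> Rabs (u - s0) <= r -> Rabs (v1 - t0) <= r -> Rabs (v2 - t0) <= r ->
     3 / 4 * (v2 - v1) <= B u v2 - B u v1).
  { intros u v1 v2 Hle Hu H1 H2.
    apply (mvt_low (fun w => B u w) (fun w => (- c * d2 X u w + a * d2 Y u w) / J)); auto.
    - intros z Hz. apply dBv; auto. apply (seg_in2 _ _ _ _ _ H1 H2 Hz).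
    - intros z Hz. apply dBv; auto. apply (seg_in2 _ _ _ _ _ H1 H2 Hz). }
  assert (Hs0 : Rabs (s0 - s0) <= r) by (unfold Rminus; rewrite Rplus_opp_r, Rabs_R0; lra).
  assert (Ht00 : Rabs (t0 - t0) <= r) by (unfold Rminus; rewrite Rplus_opp_r, Rabs_R0; lra).
  assert (Hp : Rabs (s0 + r - s0) <= r) by (replace (s0 + r - s0) with r by ring; rewrite Rabs_right; lra).
  assert (Hm : Rabs (s0 - r - s0) <= r) by (replace (s0 - r - s0) with (- r) by ring; rewrite Rabs_Ropp, Rabs_right; lra).
  assert (Hpt : Rabs (t0 + r - t0) <= r) by (replace (t0 + r - t0) with r by ring; rewrite Rabs_right; lra).
  assert (Hmt : Rabs (t0 - r - t0) <= r) by (replace (t0 - r - t0) with (- r) by ring; rewrite Rabs_Ropp, Rabs_right; lra).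
  assert (Hex : forall t, Rabs (t - t0) <= r -> exists s, Rabs (s - s0) <= r /\ A s t = 0).
  { intros t Ht.
    assert (E1 := Au s0 (s0 + r) t ltac:(lra) Hs0 Hp Ht).
    assert (E2 := Au (s0 - r) s0 t ltac:(lra) Hm Hs0 Ht).
    assert (E3 := Av s0 t0 t Hs0 Ht00 Ht).
    assert (E4 : 1 / 4 * Rabs (t - t0) <= r / 4) by lra.
    apply Rabs_le_between in E3. apply Rabs_le_between in A0.
    destruct (IVT_interv (fun u => A u t) (s0 - r) (s0 + r)) as [s [Hs Hz]].
    - intros u Hu. apply (isd_cont _ _ _ (proj1 (dAu u t ltac:(apply Rabs_le_between; lra) Ht))).
    - lra.
    - simpl. lra.
    - simpl. lra.
    - exists s. split; auto. apply Rabs_le_between; lra. }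
  set (cl := clamp (t0 - r) (t0 + r)).
  assert (cl_in : forall t, Rabs (cl t - t0) <= r).
  { intros t. apply Rabs_le_between. assert (H := clamp_in (t0 - r) (t0 + r) t ltac:(lra)). unfold cl. lra. }
  destruct (choice (fun t s => Rabs (s - s0) <= r /\ A s (cl t) = 0)) as [sf Hsf].
  { intros t. apply Hex, cl_in. }
  assert (Lz : forall s1 s2 v1 v2, Rabs (s1 - s0) <= r -> Rabs (s2 - s0) <= r -> Rabs (v1 - t0) <= r ->
     Rabs (v2 - t0) <= r -> A s1 v1 = 0 -> A s2 v2 = 0 -> Rabs (s2 - s1) <= Rabs (v2 - v1)).
  { intros s1 s2 v1 v2 H1 H2 H3 H4 Z1 Z2.
    assert (E := Av s2 v1 v2 H2 H3 H4). rewrite Z2 in E.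
    rewrite Rminus_0_l, Rabs_Ropp in E.
    assert (0 <= Rabs (v2 - v1)) by apply Rabs_pos.
    destruct (Rle_dec s1 s2) as [Hle|Hlt].
    - assert (F := Au s1 s2 v1 Hle H1 H2 H3). rewrite Z1, Rminus_0_r in F.
      rewrite Rabs_right by lra. apply Rabs_le_between in E. lra.
    - assert (F := Au s2 s1 v1 ltac:(lra) H2 H1 H3). rewrite Z1, Rminus_0_l in F.
      rewrite Rabs_left by lra. apply Rabs_le_between in E. lra. }
  assert (sf_lip : forall u v, Rabs (sf u - sf v) <= Rabs (u - v)).
  { intros u v. destruct (Hsf u) as [h1 h2]. destruct (Hsf v) as [h3 h4].
    eapply Rle_trans. apply (Lz (sf v) (sf u) (cl v) (cl u)); auto.
    apply clamp_lip. lra. }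
  assert (cl_lip : forall u v, Rabs (cl u - cl v) <= Rabs (u - v)).
  { intros u v. apply clamp_lip. lra. }
  assert (Bc : forall u v, Rabs (u - s0) <= r -> Rabs (v - t0) <= r -> continuity_2d_pt B u v).
  { intros u v Hu Hv. destruct (Box u v Hu Hv) as [Hs _].
    destruct (CX eps X Y S T HD u v Hs) as [_ [_ [cx _]]].
    destruct (CY eps X Y S T HD u v Hs) as [_ [_ [cy _]]].
    unfold B, Rdiv.
    repeat first [ assumption | apply continuity_2d_pt_plus | apply continuity_2d_pt_minus
                 | apply continuity_2d_pt_mult | apply continuity_2d_pt_const ]. }
  destruct (IVT_interv (fun t => B (sf t) (cl t)) (t0 - r) (t0 + r)) as [ts [Hts Hz]].
  - intros t Ht. apply c2d_comp. apply Bc. apply Hsf. apply cl_in.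
    apply lip_cont; auto. apply lip_cont; auto.
  - lra.
  - simpl. unfold cl. rewrite clamp_id by lra. fold cl.
    set (s2 := sf (t0 - r)).
    assert (h2 : Rabs (s2 - s0) <= r) by apply Hsf.
    assert (E1 := Bv s2 (t0 - r) t0 ltac:(lra) h2 Hmt Ht00).
    assert (E2 := Bu s0 s2 t0 Hs0 h2 Ht00).
    apply Rabs_le_between in E2. apply Rabs_le_between in B0.
    assert (1 / 4 * Rabs (s2 - s0) <= r / 4) by lra. lra.
  - simpl. unfold cl. rewrite clamp_id by lra. fold cl.
    set (s2 := sf (t0 + r)).
    assert (h2 : Rabs (s2 - s0) <= r) by apply Hsf.
    assert (E1 := Bv s2 t0 (t0 + r) ltac:(lra) h2 Ht00 Hpt).
    assert (E2 := Bu s0 s2 t0 Hs0 h2 Ht00).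
    apply Rabs_le_between in E2. apply Rabs_le_between in B0.
    assert (1 / 4 * Rabs (s2 - s0) <= r / 4) by lra. lra.
  - simpl in Hz. assert (Ecl : cl ts = ts) by (unfold cl; apply clamp_id; lra).
    rewrite Ecl in Hz. destruct (Hsf ts) as [Hs1 Hs2]. rewrite Ecl in Hs2.
    assert (Hts' : Rabs (ts - t0) <= r) by (apply Rabs_le_between; lra).
    destruct (Box (sf ts) ts Hs1 Hts') as [Hst _].
    exists (sf ts), ts. split. apply Hst.
    unfold A, B in Hs2, Hz.
    set (p := X (sf ts) ts - x') in *. set (q := Y (sf ts) ts - y') in *.
    assert (Z1 : d * p + - b * q = 0).
    { apply (Rmult_eq_reg_r (/ J)). rewrite Rmult_0_l. apply Hs2. apply Rinv_neq_0_compat; auto. }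
    assert (Z2 : - c * p + a * q = 0).
    { apply (Rmult_eq_reg_r (/ J)). rewrite Rmult_0_l. apply Hz. apply Rinv_neq_0_compat; auto. }
    assert (P0 : J * p = 0) by (unfold J; replace ((a * d - b * c) * p) with (a * (d * p + - b * q) + b * (- c * p + a * q)) by ring;
      rewrite Z1, Z2; ring).
    assert (Q0 : J * q = 0) by (unfold J; replace ((a * d - b * c) * q) with (c * (d * p + - b * q) + d * (- c * p + a * q)) by ring;
      rewrite Z1, Z2; ring).
    apply Rmult_integral in P0. apply Rmult_integral in Q0.
    destruct P0 as [P0|P0]; [contradiction|]. destruct Q0 as [Q0|Q0]; [contradiction|].
    unfold p, q in *. split; lra.
Qed.
End Open.


Theorem theorem1 (eps : R) (X Y S T : R -> R -> R) :
  0 < eps ->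
  orient_C2_diffeo eps X Y S T ->
  (exists U : R -> R -> R,
      harmonic_on (image_Phi eps X Y) U /\
      no_critical_point_on (image_Phi eps X Y) U /\
      level_curves_are eps X Y U)
  <->
  (forall t, -eps < t < eps -> forall sg1 sg2,
      dvarphi_ds X Y S T sg1 t + kappa X Y sg1 t * varphi X Y sg1 t
      = dvarphi_ds X Y S T sg2 t + kappa X Y sg2 t * varphi X Y sg2 t).
Proof.
  intros Heps HD. assert (Ho := Om_open eps X Y S T HD). split.
  - intros [U [H1 [H2 H3]]] t Ht s1 s2.
    exact (forward eps X Y S T HD Ho U H1 H2 H3 t Ht s1 s2).
  - intros H. apply (back eps X Y S T HD Ho). intros t Ht s1 s2. exact (H t Ht s1 s2).
Qed.
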